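(* Let $C$ be a convex chain with endpoints $p$ and $q$. If $C$ is contained in the lune $L(p,q)$, then the stretch factor of $C$ is at most $\frac{2\pi}{3}$.
   Context: A chain is a sequence of points $p=c_1,\dots,c_m=q$ together with the segments $c_ic_{i+1}$; it is convex if the polygon $c_1c_2\cdots c_m$ is convex (the points are in convex position and appear in this cyclic order on their convex hull). $L(p,q)$ is the intersection of the two closed disks of radius $|pq|$ centered at $p$ and at $q$. The stretch factor of the chain is the smallest $t$ such that for any two vertices $u,v$ of $C$, the length of the sub-chain of $C$ between $u$ and $v$ is at most $t|uv|$. *)

(* Defs.v *)
From Stdlib Require Import Reals Lra.
Open Scope R_scope.

Definition point := (R * R)%type.

Definition dist (a b : point) : R :=
  sqrt ((fst a - fst b) ^ 2 + (snd a - snd b) ^ 2).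

Definition orient (a b c : point) : R :=
  (fst b - fst a) * (snd c - snd a) - (snd b - snd a) * (fst c - fst a).

(* A chain with m vertices c 0, ..., c (m-1); p = c 0, q = c (m-1).
   It is convex iff the polygon c 0 c 1 ... c (m-1) is convex, i.e. the
   points are in convex position and appear in this cyclic order on their
   hull: every triple of vertices taken in index order has the same
   (nonzero) orientation. *)
Definition convex_chain (m : nat) (c : nat -> point) : Prop :=
  (forall i j k, (i < j)%nat -> (j < k)%nat -> (k < m)%nat ->
     orient (c i) (c j) (c k) > 0) \/
  (forall i j k, (i < j)%nat -> (j < k)%nat -> (k < m)%nat ->
     orient (c i) (c j) (c k) < 0).

Definition in_lune (p q x : point) : Prop :=
  dist x p <= dist p q /\ dist x q <= dist p q.

Definition chain_in_lune (m : nat) (c : nat -> point) : Prop :=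
  forall i t, (S i < m)%nat -> 0 <= t <= 1 ->
    in_lune (c 0%nat) (c (m - 1)%nat)
      ((1 - t) * fst (c i) + t * fst (c (S i)),
       (1 - t) * snd (c i) + t * snd (c (S i))).

Fixpoint subchain_length (c : nat -> point) (i n : nat) : R :=
  match n with
  | O => 0
  | S n' => subchain_length c i n' + dist (c (i + n')%nat) (c (i + S n')%nat)
  end.

(* "The stretch factor of the chain is at most t": since the stretch factor is
   the smallest t with the property below (the set of such t is upward closed
   and closed), this is equivalent to t itself having the property. *)
Definition stretch_at_most (m : nat) (c : nat -> point) (t : R) : Prop :=
  forall i j, (i <= j)%nat -> (j < m)%nat ->
    subchain_length c i (j - i) <= t * dist (c i) (c j).

(* Main.v *)
Require Import Defs.
From Stdlib Require Import Reals.
Open Scope R_scope.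
From Stdlib Require Import Lra Lia Psatz.
Require Import Defs.
Open Scope R_scope.

Definition e (t:R) : point := (cos t, sin t).
Definition nv (t:R) : point := (- sin t, cos t).
Definition dot (a b : point) : R := fst a * fst b + snd a * snd b.
Definition cross (a b : point) : R := fst a * snd b - snd a * fst b.

Lemma sc (t:R): sin t ^2 + cos t ^2 = 1.
Proof. pose proof (sin2_cos2 t). unfold Rsqr in H. nra. Qed.

Lemma PI_gt3 : 3 < PI.
Proof. pose proof PI2_3_2. lra. Qed.

Lemma sin_le_id x : 0 <= x -> sin x <= x.
Proof. intros H. destruct (Req_dec x 0) as [->|Hn].
  - rewrite sin_0; lra.
  - left; apply sin_lt_x; lra. Qed.

Lemma sin_nonneg_small x : 0 <= x <= PI -> 0 <= sin x.
Proof. intros; apply sin_ge_0; lra. Qed.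

Lemma cos_diff s1 s2 : cos s2 - cos s1 = - 2 * sin ((s1+s2)/2) * sin ((s2-s1)/2).
Proof.
  assert (Hs2 : s2 = (s1+s2)/2 + (s2-s1)/2) by field.
  assert (Hs1 : s1 = (s1+s2)/2 - (s2-s1)/2) by field.
  set (m := (s1+s2)/2) in *. set (d := (s2-s1)/2) in *.
  rewrite Hs2 at 1. rewrite Hs1 at 1.
  rewrite cos_plus, cos_minus. ring. Qed.

Lemma sin_diff s1 s2 : sin s2 - sin s1 = 2 * cos ((s1+s2)/2) * sin ((s2-s1)/2).
Proof.
  assert (Hs2 : s2 = (s1+s2)/2 + (s2-s1)/2) by field.
  assert (Hs1 : s1 = (s1+s2)/2 - (s2-s1)/2) by field.
  set (m := (s1+s2)/2) in *. set (d := (s2-s1)/2) in *.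
  rewrite Hs2 at 1. rewrite Hs1 at 1.
  rewrite sin_plus, sin_minus. ring. Qed.

Lemma comb_cos h l m : sin (h - l) * cos m = sin (h - m) * cos l + sin (m - l) * cos h.
Proof. rewrite !sin_minus. ring. Qed.

Lemma comb_sin h l m : sin (h - l) * sin m = sin (h - m) * sin l + sin (m - l) * sin h.
Proof. rewrite !sin_minus. ring. Qed.

Lemma I1 t : 0 <= t <= PI/3 -> 2*PI/3*(1 - cos t) <= t.
Proof.
  intros [H0 H1].
  set (g := fun x => x - 2*PI/3*(1 - cos x)).
  set (g' := fun x => 1 - 2*PI/3*sin x).
  assert (Hd : forall c, derivable_pt_lim g c (g' c)).
  { intro c. unfold g, g'.
    change (fun x => x - 2*PI/3*(1 - cos x)) with
      (id - (fct_cte (2*PI/3) * (fct_cte 1 - cos)))%F.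
    replace (1 - 2*PI/3*sin c) with (1 - (0 * (1 - cos c) + 2*PI/3 * (0 - - sin c))) by ring.
    apply derivable_pt_lim_minus. apply derivable_pt_lim_id.
    apply (derivable_pt_lim_mult (fct_cte (2*PI/3)) (fct_cte 1 - cos)%F c 0 (0 - - sin c)).
    apply derivable_pt_lim_const.
    apply derivable_pt_lim_minus. apply derivable_pt_lim_const. apply derivable_pt_lim_cos. }
  destruct (Rle_dec (2*PI/3*(1 - cos t)) t) as [ok|nok]; [exact ok|exfalso].
  assert (Hg : g t < 0) by (unfold g; lra).
  assert (g0 : g 0 = 0) by (unfold g; rewrite cos_0; ring).
  assert (gp : g (PI/3) = 0) by (unfold g; rewrite cos_PI3; field).
  assert (tpos : 0 < t). { destruct (Req_dec t 0) as [->|]; [rewrite g0 in Hg; lra | lra]. }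
  assert (tlt : t < PI/3). { destruct (Req_dec t (PI/3)) as [->|]; [rewrite gp in Hg; lra | lra]. }
  destruct (MVT_cor2 g g' 0 t tpos (fun c _ => Hd c)) as [c1 [E1 [c1a c1b]]].
  destruct (MVT_cor2 g g' t (PI/3) tlt (fun c _ => Hd c)) as [c2 [E2 [c2a c2b]]].
  assert (g' c1 < 0). { rewrite g0 in E1. apply Rnot_le_lt. intro Hc. assert (0 <= g' c1 * (t - 0)) by (apply Rmult_le_pos; lra). lra. }
  assert (0 < g' c2). { rewrite gp in E2. apply Rnot_le_lt. intro Hc. assert (g' c2 * (PI/3 - t) <= 0). { assert (0 <= - g' c2 * (PI/3 - t)) by (apply Rmult_le_pos; lra). lra. } lra. }
  unfold g' in *.
  assert (sin c1 < sin c2). { apply sin_increasing_1; pose proof PI_RGT_0; lra. }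
  pose proof PI_RGT_0. nra.
Qed.

Definition cl (lo hi s : R) := Rmax lo (Rmin hi s).
Lemma cl_in lo hi s : lo <= s <= hi -> cl lo hi s = s.
Proof. intros. unfold cl, Rmax, Rmin. repeat destruct Rle_dec; lra. Qed.
Lemma cl_lo lo hi s : lo <= hi -> s <= lo -> cl lo hi s = lo.
Proof. intros. unfold cl, Rmax, Rmin. repeat destruct Rle_dec; lra. Qed.
Lemma cl_hi lo hi s : lo <= hi -> hi <= s -> cl lo hi s = hi.
Proof. intros. unfold cl, Rmax, Rmin. repeat destruct Rle_dec; lra. Qed.

Lemma sqrt3_sq : sqrt 3 * sqrt 3 = 3.
Proof. apply sqrt_sqrt; lra. Qed.
Lemma sqrt3_pos : 0 < sqrt 3.
Proof. apply sqrt_lt_R0; lra. Qed.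

Lemma dot_e_diff dx dy s1 s2 :
  dx * cos s2 + dy * sin s2 - (dx * cos s1 + dy * sin s1)
  = 2 * sin ((s2 - s1)/2) * (- dx * sin ((s1+s2)/2) + dy * cos ((s1+s2)/2)).
Proof.
  pose proof (cos_diff s1 s2). pose proof (sin_diff s1 s2).
  replace (dx * cos s2 + dy * sin s2 - (dx * cos s1 + dy * sin s1))
    with (dx * (cos s2 - cos s1) + dy * (sin s2 - sin s1)) by ring.
  rewrite H, H0. ring. Qed.

Lemma corner_dom dx dy lo hi s1 s2 :
  lo <= s1 -> s1 <= s2 -> s2 <= hi -> hi - lo <= PI/2 ->
  - dx * sin lo + dy * cos lo <= 0 ->
  - dx * sin hi + dy * cos hi <= 0 ->
  dx * cos s2 + dy * sin s2 - (dx * cos s1 + dy * sin s1) <= 0.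
Proof.
  intros H1 H2 H3 H4 Hlo Hhi. rewrite dot_e_diff.
  set (m := (s1+s2)/2). set (d := (s2-s1)/2).
  pose proof PI_RGT_0.
  assert (Sd : 0 <= sin d) by (apply sin_ge_0; unfold d; lra).
  destruct (Req_dec hi lo) as [Heq|Hne].
  - assert (Hd0 : d = 0) by (unfold d; lra). rewrite Hd0, sin_0. ring_simplify. lra.
  - assert (Sp : 0 < sin (hi - lo)) by (apply sin_gt_0; lra).
    assert (S1 : 0 <= sin (hi - m)) by (apply sin_ge_0; unfold m; lra).
    assert (S2 : 0 <= sin (m - lo)) by (apply sin_ge_0; unfold m; lra).
    assert (K : sin (hi - lo) * (- dx * sin m + dy * cos m)
      = sin (hi - m) * (- dx * sin lo + dy * cos lo) + sin (m - lo) * (- dx * sin hi + dy * cos hi)).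
    { replace (sin (hi - lo) * (- dx * sin m + dy * cos m)) with (- dx * (sin (hi - lo) * sin m) + dy * (sin (hi - lo) * cos m)) by ring.
      rewrite comb_cos, comb_sin. ring. }
    assert (- dx * sin m + dy * cos m <= 0).
    { assert (sin (hi - lo) * (- dx * sin m + dy * cos m) <= 0) by nra. nra. }
    nra.
Qed.

Lemma circ_dom dx dy s1 s2 :
  s1 <= s2 -> s2 <= s1 + PI -> dx^2 + dy^2 <= 1 ->
  dx * cos s2 + dy * sin s2 - (dx * cos s1 + dy * sin s1) <= s2 - s1.
Proof.
  intros H1 H2 H3. rewrite dot_e_diff.
  set (m := (s1+s2)/2). set (d := (s2-s1)/2).
  pose proof PI_RGT_0.
  assert (Sd : 0 <= sin d) by (apply sin_ge_0; unfold d; lra).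
  assert (Sd2 : sin d <= d) by (apply sin_le_id; unfold d; lra).
  pose proof (sc m).
  assert (Q : (- dx * sin m + dy * cos m) <= 1).
  { assert ((- dx * sin m + dy * cos m)^2 <= 1).
    { assert (E : (- dx * sin m + dy * cos m)^2 + (dx * cos m + dy * sin m)^2 = (dx^2+dy^2)*(sin m^2 + cos m^2)) by ring.
      rewrite (sc m) in E. pose proof (pow2_ge_0 (dx * cos m + dy * sin m)). lra. }
    nra. }
  unfold d in *. nra.
Qed.

Definition DomP (g G : R -> R) l h := forall s1 s2, l <= s1 -> s1 <= s2 -> s2 <= h -> g s2 - g s1 <= G s2 - G s1.
Lemma DomP_add g G l m h : l <= m -> m <= h -> DomP g G l m -> DomP g G m h -> DomP g G l h.
Proof.
  intros Hlm Hmh D1 D2 s1 s2 H1 H2 H3.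
  destruct (Rle_dec s2 m). { apply D1; lra. }
  destruct (Rle_dec m s1). { apply D2; lra. }
  pose proof (D1 s1 m ltac:(lra) ltac:(lra) ltac:(lra)).
  pose proof (D2 m s2 ltac:(lra) ltac:(lra) ltac:(lra)). lra.
Qed.

Definition Aang t := PI/2 - t/2.
Definition Bang phb phy := -(PI/2) + (phb+phy)/2.
Definition ta t := PI/2 - t.
Definition tb phb := -(PI/2) + phb.
Definition f1 t s := (1 - cos t) * cos s + sin t * sin s.
Definition f2 s := cos s + s.
Definition f3 s := 1/2 * cos s + sqrt 3 / 2 * sin s.
Definition f4 (s:R) := s.
Definition f5 phb s := cos phb * cos s + sin phb * sin s.
Definition FF t phb phy s :=
  f5 phb (cl (Bang phb phy) (tb phb) s) + f4 (cl (tb phb) (-(PI/6)) s)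
  + f3 (cl (-(PI/6)) (PI/6) s) + f2 (cl (PI/6) (ta t) s) + f1 t (cl (ta t) (Aang t) s).

Definition Prm t phb phy := 0 <= t <= PI/3 /\ 0 <= phy <= phb /\ phb <= PI/3.

Lemma Prm_order t phb phy : Prm t phb phy ->
  Bang phb phy <= tb phb /\ tb phb <= -(PI/6) /\ -(PI/6) <= PI/6 /\ PI/6 <= ta t /\ ta t <= Aang t.
Proof. unfold Prm, Bang, tb, ta, Aang. pose proof PI_RGT_0. lra. Qed.

Ltac clrw :=
  repeat first
   [ rewrite cl_in by lra
   | rewrite cl_lo by lra
   | rewrite cl_hi by lra ].

Definition wv (x y : R) (s : R) := x * cos s + y * sin s.

Lemma pc x y : forall s, x * cos s + y * sin s = wv x y s.
Proof. reflexivity. Qed.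

Lemma piece1 t phb phy x y : Prm t phb phy ->
  (x-1)^2 + y^2 <= 1 -> - x * sin (Aang t) + y * cos (Aang t) <= 0 ->
  DomP (wv x y) (FF t phb phy) (ta t) (Aang t).
Proof.
  intros HP HQ HW s1 s2 H1 H2 H3. pose proof (Prm_order _ _ _ HP) as O.
  unfold FF. clrw.
  assert (HH : wv x y s2 - wv x y s1 <= f1 t s2 - f1 t s1).
  { unfold wv, f1.
    assert (K := corner_dom (x - (1 - cos t)) (y - sin t) (ta t) (Aang t) s1 s2 H1 H2 H3).
    assert (Cta : cos (ta t) = sin t) by (unfold ta; apply cos_shift).
    assert (Sta : sin (ta t) = cos t) by (unfold ta; apply sin_shift).
    rewrite Cta, Sta in K.
    assert (Z : - (1 - cos t) * sin (Aang t) + sin t * cos (Aang t) = 0).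
    { unfold Aang. rewrite sin_shift, cos_shift.
      replace t with (2 * (t/2)) at 1 3 by field.
      rewrite cos_2a_sin, sin_2a. ring. }
    pose proof (sc t).
    assert (CS : -(x - 1) * cos t + y * sin t <= 1).
    { assert ((-(x - 1) * cos t + y * sin t)^2 <= 1).
      { assert (E : (-(x - 1) * cos t + y * sin t)^2 + ((x-1) * sin t + y * cos t)^2 = ((x-1)^2+y^2)*(sin t^2 + cos t^2)) by ring.
        rewrite (sc t) in E. pose proof (pow2_ge_0 ((x-1) * sin t + y * cos t)). lra. }
      nra. }
    assert (L1 : - (x - (1 - cos t)) * cos t + (y - sin t) * sin t <= 0) by nra.
    assert (L2 : - (x - (1 - cos t)) * sin (Aang t) + (y - sin t) * cos (Aang t) <= 0) by lra.
    unfold Prm in HP. pose proof PI_RGT_0.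
    assert (Hlen : Aang t - ta t <= PI/2) by (unfold Aang, ta; lra).
    specialize (K Hlen L1 L2). lra. }
  lra.
Qed.

Lemma piece2 t phb phy x y : Prm t phb phy ->
  (x-1)^2 + y^2 <= 1 -> DomP (wv x y) (FF t phb phy) (PI/6) (ta t).
Proof.
  intros HP HQ s1 s2 H1 H2 H3. pose proof (Prm_order _ _ _ HP) as O.
  unfold FF. clrw.
  assert (HH : wv x y s2 - wv x y s1 <= f2 s2 - f2 s1).
  { unfold wv, f2. unfold Prm in HP. pose proof PI_RGT_0.
    pose proof (circ_dom (x - 1) y s1 s2 H2 ltac:(unfold ta in *; lra) HQ). lra. }
  lra.
Qed.

Lemma piece3 t phb phy x y : Prm t phb phy ->
  x^2 + y^2 <= 1 -> (x-1)^2 + y^2 <= 1 -> DomP (wv x y) (FF t phb phy) (-(PI/6)) (PI/6).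
Proof.
  intros HP HP0 HQ s1 s2 H1 H2 H3. pose proof (Prm_order _ _ _ HP) as O.
  unfold FF. clrw.
  assert (HH : wv x y s2 - wv x y s1 <= f3 s2 - f3 s1).
  { unfold wv, f3. pose proof PI_RGT_0.
    pose proof sqrt3_sq. pose proof sqrt3_pos.
    assert (K := corner_dom (x - 1/2) (y - sqrt 3/2) (-(PI/6)) (PI/6) s1 s2 H1 H2 H3 ltac:(lra)).
    rewrite sin_neg, cos_neg, sin_PI6, cos_PI6 in K.
    assert (C1 : x * (1/2) + y * (sqrt 3/2) <= 1).
    { assert ((x * (1/2) + y * (sqrt 3/2))^2 <= 1).
      { assert (E: (x * (1/2) + y * (sqrt 3/2))^2 + (x * (sqrt 3/2) - y * (1/2))^2 = (x^2+y^2) * ((1/2)^2 + (sqrt 3/2)^2)) by ring.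
        assert (Hu1 : (1/2)^2 + (sqrt 3/2)^2 = 1) by nra. rewrite Hu1 in E.
        pose proof (pow2_ge_0 (x * (sqrt 3/2) - y * (1/2))). lra. }
      nra. }
    assert (C2 : (x-1) * (-(1/2)) + y * (sqrt 3/2) <= 1).
    { assert (((x-1) * (-(1/2)) + y * (sqrt 3/2))^2 <= 1).
      { assert (E: ((x-1) * (-(1/2)) + y * (sqrt 3/2))^2 + ((x-1) * (sqrt 3/2) + y * (1/2))^2 = ((x-1)^2+y^2) * ((1/2)^2 + (sqrt 3/2)^2)) by ring.
        assert (Hu1 : (1/2)^2 + (sqrt 3/2)^2 = 1) by nra. rewrite Hu1 in E.
        pose proof (pow2_ge_0 ((x-1) * (sqrt 3/2) + y * (1/2))). lra. }
      nra. }
    assert (L1 : - (x - 1/2) * - (1/2) + (y - sqrt 3 / 2) * (sqrt 3 / 2) <= 0) by nra.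
    assert (L2 : - (x - 1/2) * (1/2) + (y - sqrt 3 / 2) * (sqrt 3 / 2) <= 0) by nra.
    specialize (K L1 L2). lra. }
  lra.
Qed.

Lemma piece4 t phb phy x y : Prm t phb phy ->
  x^2 + y^2 <= 1 -> DomP (wv x y) (FF t phb phy) (tb phb) (-(PI/6)).
Proof.
  intros HP HP0 s1 s2 H1 H2 H3. pose proof (Prm_order _ _ _ HP) as O.
  unfold FF. clrw.
  assert (HH : wv x y s2 - wv x y s1 <= f4 s2 - f4 s1).
  { unfold wv, f4. unfold Prm in HP. pose proof PI_RGT_0.
    pose proof (circ_dom x y s1 s2 H2 ltac:(unfold tb in *; lra) HP0). lra. }
  lra.
Qed.

Lemma piece5 t phb phy x y : Prm t phb phy ->
  x^2 + y^2 <= 1 ->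
  -(x - cos phb) * sin (Bang phb phy) + (y - sin phb) * cos (Bang phb phy) <= 0 ->
  DomP (wv x y) (FF t phb phy) (Bang phb phy) (tb phb).
Proof.
  intros HP HP0 HW s1 s2 H1 H2 H3. pose proof (Prm_order _ _ _ HP) as O.
  unfold FF. clrw.
  assert (HH : wv x y s2 - wv x y s1 <= f5 phb s2 - f5 phb s1).
  { unfold wv, f5. unfold Prm in HP. pose proof PI_RGT_0.
    assert (Hlen : tb phb - Bang phb phy <= PI/2) by (unfold tb, Bang; lra).
    assert (K := corner_dom (x - cos phb) (y - sin phb) (Bang phb phy) (tb phb) s1 s2 H1 H2 H3 Hlen HW).
    assert (Ctb : cos (tb phb) = sin phb).
    { unfold tb. replace (-(PI/2) + phb) with (-(PI/2 - phb)) by ring. rewrite cos_neg. apply cos_shift. }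
    assert (Stb : sin (tb phb) = - cos phb).
    { unfold tb. replace (-(PI/2) + phb) with (-(PI/2 - phb)) by ring. rewrite sin_neg, sin_shift. ring. }
    rewrite Ctb, Stb in K.
    assert (CS : x * cos phb + y * sin phb <= 1).
    { assert ((x * cos phb + y * sin phb)^2 <= 1).
      { assert (E : (x * cos phb + y * sin phb)^2 + (x * sin phb - y * cos phb)^2 = (x^2+y^2)*(sin phb^2 + cos phb^2)) by ring.
        rewrite (sc phb) in E. pose proof (pow2_ge_0 (x * sin phb - y * cos phb)). lra. }
      nra. }
    pose proof (sc phb).
    assert (L2 : - (x - cos phb) * - cos phb + (y - sin phb) * sin phb <= 0) by nra.
    specialize (K L2). lra. }
  lra.
Qed.

Definition Rg t phb phy x y :=
  x^2 + y^2 <= 1 /\ (x-1)^2 + y^2 <= 1 /\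
  - x * sin (Aang t) + y * cos (Aang t) <= 0 /\
  -(x - cos phb) * sin (Bang phb phy) + (y - sin phb) * cos (Bang phb phy) <= 0.

Lemma dom_all t phb phy x y : Prm t phb phy -> Rg t phb phy x y ->
  DomP (wv x y) (FF t phb phy) (Bang phb phy) (Aang t).
Proof.
  intros HP [R1 [R2 [R3 R4]]]. pose proof (Prm_order _ _ _ HP) as O.
  apply DomP_add with (tb phb); try lra. apply piece5; auto.
  apply DomP_add with (-(PI/6)); try lra. apply piece4; auto.
  apply DomP_add with (PI/6); try lra. apply piece3; auto.
  apply DomP_add with (ta t); try lra. apply piece2; auto.
  apply piece1; auto.
Qed.

Fixpoint sumR (f : nat -> R) (n : nat) : R :=
  match n with O => 0 | S k => sumR f k + f k end.

Lemma sumR_le f g n : (forall k, (k < n)%nat -> f k <= g k) -> sumR f n <= sumR g n.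
Proof. induction n; simpl; intros H. lra. pose proof (H n ltac:(lia)). pose proof (IHn ltac:(intros; apply H; lia)). lra. Qed.

Lemma sumR_ext f g n : (forall k, (k < n)%nat -> f k = g k) -> sumR f n = sumR g n.
Proof. induction n; simpl; intros H. lra. rewrite (H n ltac:(lia)), IHn by (intros; apply H; lia). lra. Qed.

Lemma sumR_tele (G : nat -> R) n : sumR (fun k => G k - G (S k)) n = G O - G n.
Proof. induction n; simpl. ring. rewrite IHn. ring. Qed.

Lemma sbp (x y c s : nat -> R) n :
  sumR (fun k => (x (S k) - x k) * c (S k) + (y (S k) - y k) * s (S k)) n
  = sumR (fun k => x k * (c k - c (S k)) + y k * (s k - s (S k))) (S n)
    - (x O * c O + y O * s O) + (x n * c (S n) + y n * s (S n)).
Proof. induction n; simpl. ring. simpl in IHn. rewrite IHn. ring. Qed.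

Lemma FF_AB t phb phy : Prm t phb phy ->
  FF t phb phy (Aang t) - FF t phb phy (Bang phb phy)
  = f1 t (Aang t) - f5 phb (Bang phb phy) + 2*PI/3 - t - phb.
Proof.
  intros HP. pose proof (Prm_order _ _ _ HP) as O. unfold FF. clrw.
  assert (E5 : f5 phb (tb phb) = 0).
  { unfold f5, tb. replace (-(PI/2) + phb) with (-(PI/2 - phb)) by ring.
    rewrite cos_neg, sin_neg, cos_shift, sin_shift. ring. }
  assert (E3 : f3 (PI/6) - f3 (-(PI/6)) = sqrt 3 / 2).
  { unfold f3. rewrite cos_neg, sin_neg, cos_PI6, sin_PI6. field. }
  assert (E2 : f2 (ta t) = sin t + (PI/2 - t)).
  { unfold f2, ta. rewrite cos_shift. ring. }
  assert (E2' : f2 (PI/6) = sqrt 3 / 2 + PI/6).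
  { unfold f2. rewrite cos_PI6. ring. }
  assert (E1 : f1 t (ta t) = sin t).
  { unfold f1, ta. rewrite cos_shift, sin_shift. ring. }
  unfold f4, tb in *. rewrite E5, E2, E2', E1. lra.
Qed.

Lemma f1A t : f1 t (Aang t) = 2 * sin (t/2).
Proof.
  unfold f1, Aang. rewrite cos_shift, sin_shift.
  replace t with (2 * (t/2)) at 1 3 by field.
  rewrite cos_2a_sin, sin_2a.
  replace ((1 - (1 - 2 * sin (t / 2) * sin (t / 2))) * sin (t / 2) + 2 * sin (t / 2) * cos (t / 2) * cos (t / 2))
    with (2 * sin (t/2) * (sin (t/2) ^ 2 + cos (t/2) ^ 2)) by ring.
  rewrite sc. ring.
Qed.

Lemma yb_B phb phy :
  cos phy * cos (Bang phb phy) + sin phy * sin (Bang phb phy) - f5 phb (Bang phb phy)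
  = 2 * sin ((phb - phy)/2).
Proof.
  unfold f5.
  assert (E1 : cos phy * cos (Bang phb phy) + sin phy * sin (Bang phb phy) = cos (phy - Bang phb phy)) by (rewrite cos_minus; ring).
  assert (E2 : cos phb * cos (Bang phb phy) + sin phb * sin (Bang phb phy) = cos (phb - Bang phb phy)) by (rewrite cos_minus; ring).
  rewrite E1, E2. unfold Bang.
  replace (phy - (-(PI/2) + (phb + phy)/2)) with (PI/2 - (phb - phy)/2) by field.
  replace (phb - (-(PI/2) + (phb + phy)/2)) with (PI/2 - (-((phb - phy)/2))) by field.
  rewrite !cos_shift, sin_neg. ring.
Qed.

Lemma core (n : nat) (X Y Th : nat -> R) (t phb phy lam mu : R) :
  Prm t phb phy -> 0 <= lam <= 1 -> 0 <= mu <= 1 ->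
  Th O = Aang t -> Th (S n) = Bang phb phy ->
  (forall k, (k <= n)%nat -> Th (S k) <= Th k) ->
  (forall k, (k < n)%nat ->
     X (S k) = X k + dist (X k, Y k) (X (S k), Y (S k)) * cos (Th (S k)) /\
     Y (S k) = Y k + dist (X k, Y k) (X (S k), Y (S k)) * sin (Th (S k))) ->
  (forall k, (k <= n)%nat -> Rg t phb phy (X k) (Y k)) ->
  X O = lam * (1 - cos t) -> Y O = lam * sin t ->
  X n = cos phy + mu * (cos phb - cos phy) -> Y n = sin phy + mu * (sin phb - sin phy) ->
  sumR (fun k => dist (X k, Y k) (X (S k), Y (S k))) n <= 2*PI/3 * (X n - X O).
Proof.
  intros HP Hl Hm T0 Tn Tmono Hedge Hreg X0 Y0 Xn Yn.
  pose proof (Prm_order _ _ _ HP) as O.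
  assert (Tup : forall k, (k <= S n)%nat -> Th k <= Aang t).
  { induction k; intros Hk. lra. pose proof (Tmono k ltac:(lia)). pose proof (IHk ltac:(lia)). lra. }
  assert (Tlo : forall d, (d <= S n)%nat -> Bang phb phy <= Th (S n - d)%nat).
  { induction d; intros Hd. rewrite Nat.sub_0_r. lra.
    pose proof (IHd ltac:(lia)). replace (S n - d)%nat with (S (S n - S d)) in H by lia.
    pose proof (Tmono (S n - S d)%nat ltac:(lia)). lra. }
  assert (Tlo' : forall k, (k <= S n)%nat -> Bang phb phy <= Th k).
  { intros k Hk. replace k with (S n - (S n - k))%nat by lia. apply Tlo. lia. }
  set (l := fun k => dist (X k, Y k) (X (S k), Y (S k))).
  assert (S1 : sumR l n = sumR (fun k => (X (S k) - X k) * cos (Th (S k)) + (Y (S k) - Y k) * sin (Th (S k))) n).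
  { apply sumR_ext. intros k Hk. destruct (Hedge k Hk) as [E1 E2].
    unfold l. set (dd := dist (X k, Y k) (X (S k), Y (S k))) in *.
    assert (A1 : X (S k) - X k = dd * cos (Th (S k))) by lra.
    assert (A2 : Y (S k) - Y k = dd * sin (Th (S k))) by lra.
    rewrite A1, A2.
    replace (dd * cos (Th (S k)) * cos (Th (S k)) + dd * sin (Th (S k)) * sin (Th (S k)))
      with (dd * (sin (Th (S k)) ^ 2 + cos (Th (S k)) ^ 2)) by ring.
    rewrite sc. ring. }
  change (sumR (fun k => dist (X k, Y k) (X (S k), Y (S k))) n) with (sumR l n).
  rewrite S1, (sbp X Y (fun k => cos (Th k)) (fun k => sin (Th k))).
  set (G := fun k => FF t phb phy (Th k)).
  assert (S2 : sumR (fun k => X k * (cos (Th k) - cos (Th (S k))) + Y k * (sin (Th k) - sin (Th (S k)))) (S n)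
             <= sumR (fun k => G k - G (S k)) (S n)).
  { apply sumR_le. intros k Hk.
    assert (D := dom_all t phb phy (X k) (Y k) HP (Hreg k ltac:(lia)) (Th (S k)) (Th k)
                  (Tlo' (S k) ltac:(lia)) (Tmono k ltac:(lia)) (Tup k ltac:(lia))).
    unfold wv, G in *. lra. }
  rewrite sumR_tele in S2. unfold G in S2. rewrite T0, Tn in S2.
  rewrite FF_AB in S2 by exact HP. rewrite T0, Tn.
  rewrite X0, Y0, Xn, Yn.
  pose proof (yb_B phb phy) as YB. pose proof (f1A t) as FA.
  assert (Ef1 : lam * (1 - cos t) * cos (Aang t) + lam * sin t * sin (Aang t) = lam * f1 t (Aang t)) by (unfold f1; ring).
  assert (Ef5 : (cos phy + mu * (cos phb - cos phy)) * cos (Bang phb phy) + (sin phy + mu * (sin phb - sin phy)) * sin (Bang phb phy)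
     = (1 - mu) * (cos phy * cos (Bang phb phy) + sin phy * sin (Bang phb phy)) + mu * f5 phb (Bang phb phy)) by (unfold f5; ring).
  unfold Prm in HP. pose proof PI_RGT_0.
  assert (C1 : 2 * sin (t/2) <= t) by (pose proof (sin_le_id (t/2)); lra).
  assert (C2 : 2 * sin ((phb - phy)/2) <= phb - phy) by (pose proof (sin_le_id ((phb-phy)/2)); lra).
  assert (K1 : 2*PI/3*(1 - cos t) <= t) by (apply I1; lra).
  assert (K2 : 2*PI/3*(1 - cos phb) <= phb) by (apply I1; lra).
  assert (K3 : 2*PI/3*(1 - cos phy) <= phy) by (apply I1; lra).
  assert (P1' : 0 <= (1 - lam) * (t - 2 * sin (t/2))) by (apply Rmult_le_pos; lra).
  assert (P2' : 0 <= (1 - mu) * (phb - phy - 2 * sin ((phb - phy)/2))) by (apply Rmult_le_pos; lra).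
  assert (P3' : 0 <= lam * (t - 2*PI/3*(1 - cos t))) by (apply Rmult_le_pos; lra).
  assert (P4' : 0 <= mu * (phb - 2*PI/3*(1 - cos phb))) by (apply Rmult_le_pos; lra).
  assert (P5' : 0 <= (1 - mu) * (phy - 2*PI/3*(1 - cos phy))) by (apply Rmult_le_pos; lra).
  rewrite Ef1, Ef5.
  set (cy := cos phy * cos (Bang phb phy) + sin phy * sin (Bang phb phy)) in *.
  set (c5 := f5 phb (Bang phb phy)) in *.
  set (c1 := f1 t (Aang t)) in *.
  assert (cy = c5 + 2 * sin ((phb - phy)/2)) by lra.
  nra.
Qed.

Definition NC (m:nat) (c : nat -> point) :=
  (3 <= m)%nat /\ c O = (0,0) /\ c (m-1)%nat = (1,0) /\
  (forall k, (k < m)%nat -> fst (c k)^2 + snd (c k)^2 <= 1 /\ (fst (c k) - 1)^2 + snd (c k)^2 <= 1) /\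
  (forall i j k, (i < j)%nat -> (j < k)%nat -> (k < m)%nat -> orient (c i) (c j) (c k) < 0).

Lemma ang_cross_neg a b r1 r2 : 0 < r1 -> 0 < r2 ->
  -(PI/2) <= a <= PI/2 -> -(PI/2) <= b <= PI/2 ->
  (r1 * cos a) * (r2 * sin b) - (r1 * sin a) * (r2 * cos b) < 0 -> b < a.
Proof.
  intros H1 H2 Ha Hb H. apply Rnot_le_lt. intro Hab.
  assert (E : (r1 * cos a) * (r2 * sin b) - (r1 * sin a) * (r2 * cos b) = r1 * r2 * sin (b - a)) by (rewrite sin_minus; ring).
  assert (0 <= sin (b - a)) by (apply sin_ge_0; lra).
  assert (0 <= r1 * r2 * sin (b - a)) by (apply Rmult_le_pos; [nra|lra]). lra.
Qed.


Lemma NC_y_pos m c k : NC m c -> (0 < k)%nat -> (k < m - 1)%nat -> 0 < snd (c k).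
Proof.
  intros [Hm [H0 [H1 [Hl Ho]]]] Hk1 Hk2.
  pose proof (Ho O k (m-1)%nat Hk1 Hk2 ltac:(lia)). rewrite H0, H1 in H. unfold orient in H. simpl in H. lra.
Qed.

Lemma NC_x_pos m c k : NC m c -> (0 < k)%nat -> (k < m)%nat -> 0 < fst (c k).
Proof.
  intros HN Hk1 Hk2. destruct HN as [Hm [H0 [H1 [Hl Ho]]]] eqn:EE.
  destruct (Nat.eq_dec k (m-1)) as [->|Hne]. { rewrite H1. simpl. lra. }
  pose proof (NC_y_pos m c k HN Hk1 ltac:(lia)).
  destruct (Hl k Hk2) as [A B]. apply Rnot_le_lt. intro. nra.
Qed.

Lemma NC_x_lt1 m c k : NC m c -> (k < m - 1)%nat -> fst (c k) < 1.
Proof.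
  intros HN Hk. destruct HN as [Hm [H0 [H1 [Hl Ho]]]] eqn:EE.
  destruct k. { rewrite H0. simpl. lra. }
  pose proof (NC_y_pos m c (S k) HN ltac:(lia) Hk).
  destruct (Hl (S k) ltac:(lia)) as [A B]. apply Rnot_le_lt. intro. nra.
Qed.

Definition ex (c : nat -> point) k := fst (c (S k)) - fst (c k).
Definition ey (c : nat -> point) k := snd (c (S k)) - snd (c k).
Definition ll (c : nat -> point) k := dist (c k) (c (S k)).
Definition th (c : nat -> point) k := asin (ey c k / ll c k).

Lemma ll_eq c k : ll c k = sqrt (ex c k ^2 + ey c k ^2).
Proof. unfold ll, dist, ex, ey. f_equal. ring. Qed.

Lemma cross_pos_x (d1x d1y ex' ey' d2x d2y : R) :
  d1x >= 0 -> d1y > 0 -> d2x >= 0 -> d2y < 0 ->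
  d1x * ey' - d1y * ex' < 0 -> ex' * d2y - ey' * d2x < 0 -> ex' > 0.
Proof. intros. apply Rnot_le_gt. intro.
  destruct (Rle_dec ey' 0).
  - assert (ey' * d2x <= 0) by nra.
    assert (0 <= ex' * d2y) by nra. lra.
  - assert (0 <= d1x * ey') by (apply Rmult_le_pos; lra).
    assert (d1y * ex' <= 0) by nra. lra.
Qed.

Lemma NC_ex_pos m c k : NC m c -> (S k < m)%nat -> 0 < ex c k.
Proof.
  intros HN Hk. destruct HN as [Hm [H0 [H1 [Hl Ho]]]] eqn:EE. unfold ex.
  destruct k.
  { rewrite H0. simpl. pose proof (NC_x_pos m c 1 HN ltac:(lia) ltac:(lia)). lra. }
  destruct (Nat.eq_dec (S (S k)) (m-1)) as [Heq|Hne].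
  { rewrite Heq, H1. simpl. pose proof (NC_x_lt1 m c (S k) HN ltac:(lia)). lra. }
  pose proof (Ho O (S k) (S (S k)) ltac:(lia) ltac:(lia) ltac:(lia)) as O1.
  pose proof (Ho (S k) (S (S k)) (m-1)%nat ltac:(lia) ltac:(lia) ltac:(lia)) as O2.
  rewrite H0 in O1. rewrite H1 in O2. unfold orient in O1, O2. simpl in O1, O2.
  pose proof (NC_x_pos m c (S k) HN ltac:(lia) ltac:(lia)).
  pose proof (NC_y_pos m c (S k) HN ltac:(lia) ltac:(lia)).
  pose proof (NC_x_lt1 m c (S (S k)) HN ltac:(lia)).
  pose proof (NC_y_pos m c (S (S k)) HN ltac:(lia) ltac:(lia)).
  apply (cross_pos_x (fst (c (S k))) (snd (c (S k))) _ (snd (c (S (S k))) - snd (c (S k))) (1 - fst (c (S (S k)))) (0 - snd (c (S (S k))))); try lra.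
Qed.

Lemma NC_ll_pos m c k : NC m c -> (S k < m)%nat -> 0 < ll c k.
Proof.
  intros HN Hk. rewrite ll_eq. apply sqrt_lt_R0. pose proof (NC_ex_pos m c k HN Hk).
  pose proof (pow2_ge_0 (ey c k)). nra.
Qed.

Lemma NC_edge m c k : NC m c -> (S k < m)%nat ->
  fst (c (S k)) = fst (c k) + ll c k * cos (th c k) /\
  snd (c (S k)) = snd (c k) + ll c k * sin (th c k) /\
  -(PI/2) < th c k < PI/2.
Proof.
  intros HN Hk. pose proof (NC_ex_pos m c k HN Hk) as Ex. pose proof (NC_ll_pos m c k HN Hk) as Lp.
  pose proof (ll_eq c k) as LE.
  assert (Lsq : ll c k * ll c k = ex c k ^2 + ey c k ^2).
  { rewrite LE. apply sqrt_sqrt. pose proof (pow2_ge_0 (ex c k)). pose proof (pow2_ge_0 (ey c k)). lra. }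
  assert (Bd : -1 < ey c k / ll c k < 1).
  { split.
    - apply (Rmult_lt_reg_r (ll c k)); auto. unfold Rdiv. rewrite Rmult_assoc, Rinv_l by lra. nra.
    - apply (Rmult_lt_reg_r (ll c k)); auto. unfold Rdiv. rewrite Rmult_assoc, Rinv_l by lra. nra. }
  unfold th. split; [|split].
  - rewrite cos_asin by lra.
    assert (E : 1 - (ey c k / ll c k)² = (ex c k / ll c k)^2).
    { unfold Rsqr. field_simplify_eq; [|lra]. nra. }
    rewrite E, sqrt_pow2. field_simplify; [unfold ex; ring | lra].
    unfold Rdiv; apply Rmult_le_pos; [lra | left; apply Rinv_0_lt_compat; lra].
  - rewrite sin_asin by lra. field_simplify; [unfold ey; ring | lra].
  - apply asin_bound_lt. lra.
Qed.

Lemma polar x y : 0 < x ->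
  0 < sqrt (x^2+y^2) /\
  x = sqrt (x^2+y^2) * cos (asin (y / sqrt (x^2+y^2))) /\
  y = sqrt (x^2+y^2) * sin (asin (y / sqrt (x^2+y^2))) /\
  -(PI/2) < asin (y / sqrt (x^2+y^2)) < PI/2.
Proof.
  intros Hx. set (r := sqrt (x^2+y^2)).
  assert (Hr : 0 < r) by (apply sqrt_lt_R0; pose proof (pow2_ge_0 y); nra).
  assert (Rsq : r * r = x^2 + y^2) by (apply sqrt_sqrt; pose proof (pow2_ge_0 y); nra).
  assert (Bd : -1 < y / r < 1).
  { split.
    - apply (Rmult_lt_reg_r r); auto. unfold Rdiv. rewrite Rmult_assoc, Rinv_l by lra. nra.
    - apply (Rmult_lt_reg_r r); auto. unfold Rdiv. rewrite Rmult_assoc, Rinv_l by lra. nra. }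
  split; [lra|split; [|split]].
  - rewrite cos_asin by lra.
    assert (E : 1 - (y / r)² = (x / r)^2).
    { unfold Rsqr. field_simplify_eq; [|lra]. nra. }
    rewrite E, sqrt_pow2. field. lra.
    unfold Rdiv; apply Rmult_le_pos; [lra | left; apply Rinv_0_lt_compat; lra].
  - rewrite sin_asin by lra. field. lra.
  - apply asin_bound_lt. lra.
Qed.

Definition phU (c : nat -> point) (i : nat) :=
  if Nat.eq_dec i O then PI/2 else asin (snd (c i) / sqrt (fst (c i)^2 + snd (c i)^2)).
Definition phV (m : nat) (c : nat -> point) (j : nat) :=
  if Nat.eq_dec j (m-1) then PI/2 else asin (snd (c j) / sqrt ((1 - fst (c j))^2 + snd (c j)^2)).
Definition rU (c : nat -> point) (i : nat) := sqrt (fst (c i)^2 + snd (c i)^2).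
Definition rV (c : nat -> point) (j : nat) := sqrt ((1 - fst (c j))^2 + snd (c j)^2).

Lemma phU_spec m c i : NC m c -> (0 < i)%nat -> (i < m - 1)%nat ->
  0 < rU c i /\ fst (c i) = rU c i * cos (phU c i) /\ snd (c i) = rU c i * sin (phU c i) /\
  0 < phU c i < PI/2.
Proof.
  intros HN H1 H2. unfold phU, rU. destruct (Nat.eq_dec i 0) as [E|_]; [lia|].
  pose proof (NC_x_pos m c i HN H1 ltac:(lia)) as Hx.
  pose proof (NC_y_pos m c i HN H1 H2) as Hy.
  destruct (polar _ (snd (c i)) Hx) as [A [B [C D]]].
  split; [|split; [|split]]; auto. split; [|lra].
  apply Rnot_le_lt. intro. assert (sin (asin (snd (c i) / sqrt (fst (c i) ^ 2 + snd (c i) ^ 2))) <= 0).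
  { destruct (Req_dec (asin (snd (c i) / sqrt (fst (c i) ^ 2 + snd (c i) ^ 2))) 0) as [->|].
    rewrite sin_0; lra. left; apply sin_lt_0_var; pose proof PI_RGT_0; lra. }
  nra.
Qed.

Lemma phV_spec m c j : NC m c -> (0 < j)%nat -> (j < m - 1)%nat ->
  0 < rV c j /\ fst (c j) = 1 - rV c j * cos (phV m c j) /\ snd (c j) = rV c j * sin (phV m c j) /\
  0 < phV m c j < PI/2.
Proof.
  intros HN H1 H2. unfold phV, rV. destruct (Nat.eq_dec j (m-1)) as [E|_]; [lia|].
  pose proof (NC_x_lt1 m c j HN H2) as Hx. assert (Hx' : 0 < 1 - fst (c j)) by lra.
  pose proof (NC_y_pos m c j HN H1 H2) as Hy.
  destruct (polar _ (snd (c j)) Hx') as [A [B [C D]]].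
  split; [|split; [|split]]; auto. lra. split; [|lra].
  apply Rnot_le_lt. intro. assert (sin (asin (snd (c j) / sqrt ((1 - fst (c j)) ^ 2 + snd (c j) ^ 2))) <= 0).
  { destruct (Req_dec (asin (snd (c j) / sqrt ((1 - fst (c j)) ^ 2 + snd (c j) ^ 2))) 0) as [->|].
    rewrite sin_0; lra. left; apply sin_lt_0_var; pose proof PI_RGT_0; lra. }
  nra.
Qed.

Ltac ringlt O :=
  lazymatch goal with |- ?X < 0 => lazymatch type of O with ?Y < 0 =>
    replace X with Y by ring; exact O end end.

Lemma orient_cross (a b d : point) :
  orient a b d = (fst b - fst a) * (snd d - snd a) - (snd b - snd a) * (fst d - fst a).
Proof. reflexivity. Qed.

Lemma th_mono m c k : NC m c -> (S (S k) < m)%nat -> th c (S k) < th c k.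
Proof.
  intros HN Hk. destruct HN as [Hm [H0 [H1 [Hl Ho]]]] eqn:EE.
  pose proof (Ho k (S k) (S (S k)) ltac:(lia) ltac:(lia) ltac:(lia)) as O.
  destruct (NC_edge m c k HN ltac:(lia)) as [E1 [E2 R1]].
  destruct (NC_edge m c (S k) HN ltac:(lia)) as [E3 [E4 R2]].
  pose proof (NC_ll_pos m c k HN ltac:(lia)). pose proof (NC_ll_pos m c (S k) HN ltac:(lia)).
  unfold orient in O. rewrite E3, E4, E1, E2 in O.
  apply (ang_cross_neg _ _ (ll c k) (ll c (S k))); try lra.
Qed.

Lemma th_mono' m c k l : NC m c -> (k <= l)%nat -> (S l < m)%nat -> th c l <= th c k.
Proof.
  intros HN Hkl Hl. induction l.
  - assert (k = O) by lia. subst. lra.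
  - destruct (Nat.eq_dec k (S l)) as [->|Hne]. lra.
    pose proof (th_mono m c l HN Hl). pose proof (IHl ltac:(lia) ltac:(lia)). lra.
Qed.

Lemma th_range m c k : NC m c -> (S k < m)%nat -> -(PI/2) < th c k < PI/2.
Proof. intros HN Hk. destruct (NC_edge m c k HN Hk) as [_ [_ R]]. exact R. Qed.

Lemma phU_0 c : phU c O = PI/2.
Proof. unfold phU. destruct (Nat.eq_dec 0 0); [reflexivity|lia]. Qed.
Lemma phV_last m c : phV m c (m-1)%nat = PI/2.
Proof. unfold phV. destruct (Nat.eq_dec (m-1) (m-1)); [reflexivity|lia]. Qed.

Lemma th_lt_phU m c i : NC m c -> (S i < m)%nat -> th c i <= phU c i.
Proof.
  intros HN Hi. pose proof (th_range m c i HN Hi).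
  destruct (Nat.eq_dec i 0) as [->|Hne]. rewrite phU_0. lra.
  destruct HN as [Hm [H0 [H1 [Hl Ho]]]] eqn:EE.
  destruct (phU_spec m c i HN ltac:(lia) ltac:(lia)) as [Rp [Ux [Uy Pr]]].
  pose proof (Ho O i (S i) ltac:(lia) ltac:(lia) ltac:(lia)) as O.
  destruct (NC_edge m c i HN Hi) as [E1 [E2 R1]].
  pose proof (NC_ll_pos m c i HN Hi).
  unfold orient in O. rewrite H0, E1, E2 in O. simpl in O. rewrite Ux, Uy in O.
  left. apply (ang_cross_neg _ _ (rU c i) (ll c i)); try lra.
Qed.

Lemma th_gt_phV m c j : NC m c -> (0 < j)%nat -> (j < m)%nat -> - phV m c j <= th c (j-1).
Proof.
  intros HN Hj0 Hj. assert (Hs : (S (j-1) < m)%nat) by lia. pose proof (th_range m c (j-1) HN Hs).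
  destruct (Nat.eq_dec j (m-1)) as [->|Hne]. rewrite phV_last. lra.
  destruct HN as [Hm [H0 [H1 [Hl Ho]]]] eqn:EE.
  destruct (phV_spec m c j HN ltac:(lia) ltac:(lia)) as [Rp [Vx [Vy Pr]]].
  pose proof (Ho (j-1)%nat j (m-1)%nat ltac:(lia) ltac:(lia) ltac:(lia)) as O.
  destruct (NC_edge m c (j-1) HN Hs) as [E1 [E2 R1]].
  replace (S (j-1)) with j in E1, E2 by lia.
  pose proof (NC_ll_pos m c (j-1) HN Hs).
  assert (A1 : fst (c (j-1)%nat) = 1 - rV c j * cos (phV m c j) - ll c (j-1)%nat * cos (th c (j-1)%nat)) by lra.
  assert (A2 : snd (c (j-1)%nat) = rV c j * sin (phV m c j) - ll c (j-1)%nat * sin (th c (j-1)%nat)) by lra.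
  unfold orient in O. rewrite H1 in O. simpl in O. rewrite Vx, Vy, A1, A2 in O.
  left. apply (ang_cross_neg _ _ (ll c (j-1)) (rV c j)); try lra.
  rewrite cos_neg, sin_neg. ringlt O.
Qed.

Lemma NC_x_nonneg m c k : NC m c -> (k < m)%nat -> 0 <= fst (c k) <= 1.
Proof.
  intros HN Hk. destruct HN as [Hm [H0 [H1 [Hl Ho]]]] eqn:EE. destruct (Hl k Hk) as [A B].
  pose proof (pow2_ge_0 (snd (c k))). split; nra.
Qed.

Lemma W1 m c i k : NC m c -> (i <= k)%nat -> (k < m)%nat -> (S i < m)%nat ->
  - fst (c k) * sin (phU c i) + snd (c k) * cos (phU c i) <= 0.
Proof.
  intros HN Hik Hk Hi.
  destruct (Nat.eq_dec i 0) as [->|Hne].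
  { rewrite phU_0, sin_PI2, cos_PI2. pose proof (NC_x_nonneg m c k HN Hk). lra. }
  destruct (phU_spec m c i HN ltac:(lia) ltac:(lia)) as [Rp [Ux [Uy Pr]]].
  destruct (Nat.eq_dec k i) as [->|Hne'].
  { rewrite Ux, Uy at 1. right. ring. }
  destruct HN as [Hm [H0 [H1 [Hl Ho]]]] eqn:EE.
  pose proof (Ho O i k ltac:(lia) ltac:(lia) ltac:(lia)) as O.
  unfold orient in O. rewrite H0 in O. simpl in O. rewrite Ux, Uy in O.
  assert (rU c i * (- fst (c k) * sin (phU c i) + snd (c k) * cos (phU c i)) < 0) by lra.
  assert (- fst (c k) * sin (phU c i) + snd (c k) * cos (phU c i) < 0).
  { apply Rnot_le_lt. intro. assert (0 <= rU c i * (- fst (c k) * sin (phU c i) + snd (c k) * cos (phU c i))) by (apply Rmult_le_pos; lra). lra. }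
  lra.
Qed.

Lemma W2 m c j k : NC m c -> (k <= j)%nat -> (j < m)%nat -> (0 < j)%nat ->
  cos (phV m c j) * (snd (c k) - snd (c j)) + sin (phV m c j) * (fst (c k) - fst (c j)) <= 0.
Proof.
  intros HN Hkj Hj Hj0.
  destruct (Nat.eq_dec j (m-1)) as [->|Hne].
  { rewrite phV_last, sin_PI2, cos_PI2. destruct HN as [Hm [H0 [H1 [Hl Ho]]]] eqn:EE. rewrite H1. simpl.
    pose proof (NC_x_nonneg m c k HN ltac:(lia)). lra. }
  destruct (phV_spec m c j HN ltac:(lia) ltac:(lia)) as [Rp [Vx [Vy Pr]]].
  destruct (Nat.eq_dec k j) as [->|Hne'].
  { right. ring. }
  destruct HN as [Hm [H0 [H1 [Hl Ho]]]] eqn:EE.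
  pose proof (Ho k j (m-1)%nat ltac:(lia) ltac:(lia) ltac:(lia)) as O.
  unfold orient in O. rewrite H1 in O. simpl in O. rewrite Vx, Vy in O. rewrite Vx, Vy.
  assert (rV c j * (cos (phV m c j) * (snd (c k) - rV c j * sin (phV m c j)) + sin (phV m c j) * (fst (c k) - (1 - rV c j * cos (phV m c j)))) < 0) by lra.
  assert (cos (phV m c j) * (snd (c k) - rV c j * sin (phV m c j)) + sin (phV m c j) * (fst (c k) - (1 - rV c j * cos (phV m c j))) < 0).
  { apply Rnot_le_lt. intro. assert (0 <= rV c j * (cos (phV m c j) * (snd (c k) - rV c j * sin (phV m c j)) + sin (phV m c j) * (fst (c k) - (1 - rV c j * cos (phV m c j))))) by (apply Rmult_le_pos; lra). lra. }
  lra.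
Qed.

Definition Rot (w : R) (p : point) : point :=
  (fst p * cos w + snd p * sin w, - fst p * sin w + snd p * cos w).

Lemma Rot_dist w a b : dist (Rot w a) (Rot w b) = dist a b.
Proof.
  unfold dist, Rot; simpl. f_equal.
  transitivity (((fst a - fst b)^2 + (snd a - snd b)^2) * (sin w ^2 + cos w ^2)); [ring|].
  rewrite sc. ring.
Qed.

Lemma Rot_cross w A x y :
  - fst (Rot w (x,y)) * sin A + snd (Rot w (x,y)) * cos A = - x * sin (A + w) + y * cos (A + w).
Proof. unfold Rot; simpl. rewrite sin_plus, cos_plus. ring. Qed.

Lemma cosPIm z : cos (PI - z) = - cos z.
Proof. rewrite cos_minus, cos_PI, sin_PI. ring. Qed.
Lemma sinPIm z : sin (PI - z) = sin z.
Proof. rewrite sin_minus, cos_PI, sin_PI. ring. Qed.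

Lemma subchain_sum c i n : subchain_length c i n = sumR (fun k => dist (c (i+k)%nat) (c (i + S k)%nat)) n.
Proof. induction n; simpl; auto. rewrite IHn. reflexivity. Qed.

Lemma cos_pos_lt a : 0 <= a < PI/2 -> 0 < cos a.
Proof. intros. apply cos_gt_0; pose proof PI_RGT_0; lra. Qed.

Lemma phV_le m c j : NC m c -> (0 < j)%nat -> (j < m)%nat -> 0 < phV m c j <= PI/2.
Proof.
  intros HN H1 H2. destruct (Nat.eq_dec j (m-1)) as [->|Hne].
  rewrite phV_last. pose proof PI_RGT_0. lra.
  destruct (phV_spec m c j HN H1 ltac:(lia)) as [_ [_ [_ P]]]. lra.
Qed.

Lemma phU_le m c i : NC m c -> (i < m - 1)%nat -> 0 < phU c i <= PI/2.
Proof.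
  intros HN H1. destruct (Nat.eq_dec i 0) as [->|Hne].
  rewrite phU_0. pose proof PI_RGT_0. lra.
  destruct (phU_spec m c i HN ltac:(lia) H1) as [_ [_ [_ P]]]. lra.
Qed.

Lemma v_b m c j : NC m c -> (0 < j)%nat -> (j < m)%nat ->
  (fst (c j) - cos (PI - 2 * phV m c j)) * sin (phV m c j) + (snd (c j) - sin (PI - 2 * phV m c j)) * cos (phV m c j) = 0.
Proof.
  intros HN H1 H2. rewrite cosPIm, sinPIm.
  replace (2 * phV m c j) with (phV m c j + phV m c j) by ring.
  rewrite cos_plus, sin_plus.
  destruct (Nat.eq_dec j (m-1)) as [->|Hne].
  { destruct HN as [Hm [H0 [H3 [Hl Ho]]]]. rewrite H3, phV_last, sin_PI2, cos_PI2. simpl. ring. }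
  destruct (phV_spec m c j HN H1 ltac:(lia)) as [Rp [Vx [Vy P]]].
  rewrite Vx, Vy.
  transitivity (sin (phV m c j) * (1 - (sin (phV m c j) ^2 + cos (phV m c j) ^2))); [ring|].
  rewrite sc. ring.
Qed.

Lemma Rot_cross2 w B x y bx by' :
  -(fst (Rot w (x,y)) - fst (Rot w (bx,by'))) * sin B + (snd (Rot w (x,y)) - snd (Rot w (bx,by'))) * cos B
  = -(x - bx) * sin (B + w) + (y - by') * cos (B + w).
Proof. unfold Rot; simpl. rewrite sin_plus, cos_plus. ring. Qed.

Lemma Rot_e w a : Rot w (cos a, sin a) = (cos (a - w), sin (a - w)).
Proof. unfold Rot; simpl. rewrite cos_minus, sin_minus. f_equal; ring. Qed.

Lemma cs_sqrt a b w : a * cos w + b * sin w <= sqrt (a^2 + b^2).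
Proof.
  destruct (Rle_dec (a * cos w + b * sin w) 0) as [H|H].
  - pose proof (sqrt_pos (a^2+b^2)). lra.
  - rewrite <- (sqrt_pow2 (a * cos w + b * sin w)) by lra.
    apply sqrt_le_1_alt.
    assert (E: (a * cos w + b * sin w)^2 + (a * sin w - b * cos w)^2 = (a^2+b^2) * (sin w^2 + cos w^2)) by ring.
    rewrite sc in E. pose proof (pow2_ge_0 (a * sin w - b * cos w)). lra.
Qed.

Lemma div_le1 a b : 0 < b -> 0 <= a <= b -> 0 <= a / b <= 1.
Proof.
  intros Hb [H1 H2]. split.
  - unfold Rdiv. apply Rmult_le_pos; [lra|left; apply Rinv_0_lt_compat; lra].
  - apply (Rmult_le_reg_r b); auto. unfold Rdiv. rewrite Rmult_assoc, Rinv_l by lra. lra.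
Qed.

Lemma r_le r C : 0 < r -> r * r <= 2 * r * C -> r <= 2 * C.
Proof. intros. nra. Qed.

Lemma Gamma m c i j w : NC m c -> (i < j)%nat -> (j < m)%nat -> w <= 0 ->
  PI/3 <= phU c i - w -> phU c i - w <= PI/2 -> ((0 < i)%nat -> phU c i - w < PI/2) ->
  PI - 2 * phV m c j - w <= PI/3 ->
  (forall k, (i <= k <= j)%nat -> (fst (c k) - cos w)^2 + (snd (c k) - sin w)^2 <= 1) ->
  subchain_length c i (j - i) <= 2*PI/3 * dist (c i) (c j).
Proof.
  intros HN Hij Hj Hw Hu1 Hu2 Hu3 Hv Hreg.
  set (n := (j - i)%nat).
  set (X := fun k => fst (Rot w (c (i+k)%nat))).
  set (Y := fun k => snd (Rot w (c (i+k)%nat))).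
  set (t := PI - 2 * (phU c i - w)).
  set (phb := PI - 2 * phV m c j - w).
  set (phy := - w).
  set (Th := fun k => (if Nat.eq_dec k 0 then phU c i else if Nat.leb k n then th c (i + k - 1)%nat else - phV m c j) - w).
  set (lam := if Nat.eq_dec i 0 then 0 else rU c i / (2 * cos (phU c i - w))).
  set (mu := if Nat.eq_dec j (m-1) then 0 else rV c j / (2 * cos (phV m c j))).
  pose proof PI_RGT_0 as PIp.
  pose proof (phV_le m c j HN ltac:(lia) Hj) as PV.
  pose proof (phU_le m c i HN ltac:(lia)) as PU.
  assert (HP : Prm t phb phy) by (unfold Prm, t, phb, phy; lra).
  assert (Core := core n X Y Th t phb phy lam mu HP).
  assert (Hlam : 0 <= lam <= 1).
  { unfold lam. destruct (Nat.eq_dec i 0) as [E|E]. lra.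
    destruct (phU_spec m c i HN ltac:(lia) ltac:(lia)) as [Rp [Ux [Uy Pr]]].
    assert (Cp : 0 < cos (phU c i - w)) by (apply cos_pos_lt; specialize (Hu3 ltac:(lia)); lra).
    apply div_le1. lra. split. lra.
    apply r_le; auto.
    pose proof (Hreg i ltac:(lia)) as R. rewrite Ux, Uy in R. rewrite cos_minus.
    pose proof (sc (phU c i)). pose proof (sc w). nra. }
  assert (Hmu : 0 <= mu <= 1).
  { unfold mu. destruct (Nat.eq_dec j (m-1)) as [E|E]. lra.
    destruct (phV_spec m c j HN ltac:(lia) ltac:(lia)) as [Rp [Vx [Vy Pr]]].
    assert (Cp : 0 < cos (phV m c j)) by (apply cos_pos_lt; lra).
    apply div_le1. lra. split. lra.
    apply r_le; auto.
    destruct HN as [Hm [H0 [H1 [Hl Ho]]]]. destruct (Hl j Hj) as [R _]. rewrite Vx, Vy in R.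
    pose proof (sc (phV m c j)). nra. }
  assert (T0 : Th O = Aang t).
  { unfold Th, Aang, t. destruct (Nat.eq_dec 0 0); [|lia]. field. }
  assert (Tn : Th (S n) = Bang phb phy).
  { unfold Th, Bang, phb, phy. destruct (Nat.eq_dec (S n) 0); [lia|].
    replace (Nat.leb (S n) n) with false by (symmetry; apply Nat.leb_gt; lia). field. }
  assert (Tm : forall k, (k <= n)%nat -> Th (S k) <= Th k).
  { intros k Hk. unfold Th.
    destruct (Nat.eq_dec (S k) 0) as [E|_]; [lia|].
    destruct (Nat.eq_dec k 0) as [->|Hk0].
    - replace (Nat.leb 1 n) with true by (symmetry; apply Nat.leb_le; unfold n; lia).
      replace (i + 1 - 1)%nat with i by lia.
      pose proof (th_lt_phU m c i HN ltac:(lia)). lra.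
    - replace (Nat.leb k n) with true by (symmetry; apply Nat.leb_le; lia).
      destruct (Nat.eq_dec k n) as [->|Hkn].
      + replace (Nat.leb (S n) n) with false by (symmetry; apply Nat.leb_gt; lia).
        replace (i + n - 1)%nat with (j - 1)%nat by (unfold n; lia).
        pose proof (th_gt_phV m c j HN ltac:(lia) Hj). lra.
      + replace (Nat.leb (S k) n) with true by (symmetry; apply Nat.leb_le; lia).
        replace (i + S k - 1)%nat with (i + k)%nat by lia.
        pose proof (th_mono' m c (i + k - 1)%nat (i + k)%nat HN ltac:(lia) ltac:(unfold n in *; lia)). lra. }
  assert (He : forall k, (k < n)%nat ->
     X (S k) = X k + dist (X k, Y k) (X (S k), Y (S k)) * cos (Th (S k)) /\
     Y (S k) = Y k + dist (X k, Y k) (X (S k), Y (S k)) * sin (Th (S k))).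
  { intros k Hk.
    assert (D : dist (X k, Y k) (X (S k), Y (S k)) = ll c (i + k)).
    { unfold X, Y. rewrite <- !surjective_pairing. rewrite Rot_dist. unfold ll.
      replace (i + S k)%nat with (S (i + k)) by lia. reflexivity. }
    assert (TT : Th (S k) = th c (i + k) - w).
    { unfold Th. destruct (Nat.eq_dec (S k) 0); [lia|].
      replace (Nat.leb (S k) n) with true by (symmetry; apply Nat.leb_le; lia).
      replace (i + S k - 1)%nat with (i + k)%nat by lia. reflexivity. }
    rewrite D, TT.
    destruct (NC_edge m c (i + k) HN ltac:(unfold n in *; lia)) as [E1 [E2 _]].
    unfold X, Y, Rot. simpl. replace (i + S k)%nat with (S (i + k)) by lia.
    rewrite E1, E2, cos_minus, sin_minus. split; ring. }
  assert (Hr : forall k, (k <= n)%nat -> Rg t phb phy (X k) (Y k)).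
  { intros k Hk. unfold Rg.
    destruct HN as [Hm [H0 [H1 [Hl Ho]]]] eqn:EE.
    destruct (Hl (i + k)%nat ltac:(unfold n in *; lia)) as [L1 L2].
    pose proof (Hreg (i + k)%nat ltac:(unfold n in *; lia)) as L3.
    pose proof (sc w).
    split; [|split; [|split]].
    - unfold X, Y, Rot; simpl. nra.
    - unfold X, Y, Rot; simpl. nra.
    - unfold X, Y. rewrite (surjective_pairing (c (i + k)%nat)). rewrite Rot_cross.
      replace (Aang t + w) with (phU c i) by (unfold Aang, t; field).
      apply (W1 m c i (i + k)%nat HN); unfold n in *; lia.
    - assert (Eb : Rot w (cos (PI - 2 * phV m c j), sin (PI - 2 * phV m c j)) = (cos phb, sin phb)).
      { rewrite Rot_e. unfold phb. f_equal; f_equal; ring. }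
      replace (cos phb) with (fst (Rot w (cos (PI - 2 * phV m c j), sin (PI - 2 * phV m c j)))) by (rewrite Eb; reflexivity).
      replace (sin phb) with (snd (Rot w (cos (PI - 2 * phV m c j), sin (PI - 2 * phV m c j)))) by (rewrite Eb; reflexivity).
      unfold X, Y. rewrite (surjective_pairing (c (i + k)%nat)). rewrite Rot_cross2.
      replace (Bang phb phy + w) with (- phV m c j) by (unfold Bang, phb, phy; field).
      rewrite sin_neg, cos_neg.
      pose proof (v_b m c j HN ltac:(lia) Hj) as VB.
      pose proof (W2 m c j (i + k)%nat HN ltac:(unfold n in *; lia) Hj ltac:(lia)) as WW.
      lra. }
  assert (U : X O = lam * (1 - cos t) /\ Y O = lam * sin t).
  { unfold X, Y, lam, t. replace (i + 0)%nat with i by lia.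
    destruct (Nat.eq_dec i 0) as [->|Hi0].
    { destruct HN as [Hm [H0 [H1 [Hl Ho]]]]. rewrite H0. unfold Rot; simpl. split; ring. }
    destruct (phU_spec m c i HN ltac:(lia) ltac:(lia)) as [Rp [Ux [Uy Pr]]].
    assert (Cp : 0 < cos (phU c i - w)) by (apply cos_pos_lt; specialize (Hu3 ltac:(lia)); lra).
    rewrite (surjective_pairing (c i)), Ux, Uy. unfold Rot; simpl.
    replace (PI - 2 * (phU c i - w)) with (PI - (2 * (phU c i - w))) by ring.
    rewrite cosPIm, sinPIm, cos_2a_cos, sin_2a.
    rewrite cos_minus, sin_minus in *. split; field; lra. }
  assert (V : X n = cos phy + mu * (cos phb - cos phy) /\ Y n = sin phy + mu * (sin phb - sin phy)).
  { unfold X, Y, mu, phb, phy. replace (i + n)%nat with j by (unfold n; lia).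
    rewrite cos_neg, sin_neg.
    destruct (Nat.eq_dec j (m-1)) as [->|Hj1].
    { destruct HN as [Hm [H0 [H1 [Hl Ho]]]]. rewrite H1. unfold Rot; simpl. split; ring. }
    destruct (phV_spec m c j HN ltac:(lia) ltac:(lia)) as [Rp [Vx [Vy Pr]]].
    assert (Cp : 0 < cos (phV m c j)) by (apply cos_pos_lt; lra).
    rewrite (surjective_pairing (c j)), Vx, Vy. unfold Rot; simpl.
    replace (PI - 2 * phV m c j - w) with (PI - (2 * phV m c j + w)) by ring.
    rewrite cosPIm, sinPIm, cos_plus, sin_plus, cos_2a_cos, sin_2a.
    split; field; lra. }
  destruct U as [X0 Y0]. destruct V as [Xn Yn].
  specialize (Core Hlam Hmu T0 Tn Tm He Hr X0 Y0 Xn Yn).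
  rewrite subchain_sum. fold n.
  assert (SS : sumR (fun k => dist (c (i + k)%nat) (c (i + S k)%nat)) n = sumR (fun k => dist (X k, Y k) (X (S k), Y (S k))) n).
  { apply sumR_ext. intros k _. unfold X, Y. rewrite <- !surjective_pairing, Rot_dist. reflexivity. }
  rewrite SS.
  assert (XX : X n - X O <= dist (c i) (c j)).
  { unfold X. replace (i + n)%nat with j by (unfold n; lia). replace (i + 0)%nat with i by lia.
    unfold dist.
    replace ((fst (c i) - fst (c j)) ^ 2 + (snd (c i) - snd (c j)) ^ 2) with ((fst (c j) - fst (c i)) ^ 2 + (snd (c j) - snd (c i)) ^ 2) by ring.
    unfold Rot; cbn [fst snd].
    pose proof (cs_sqrt (fst (c j) - fst (c i)) (snd (c j) - snd (c i)) w). lra. }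
  assert (0 < 2 * PI / 3) by lra.
  apply Rle_trans with (2 * PI / 3 * (X n - X O)); [exact Core|].
  apply Rmult_le_compat_l; lra.
Qed.

Lemma sumR_tele2 (f : nat -> R) n : sumR (fun k => f (S k) - f k) n = f n - f O.
Proof. induction n; simpl. ring. rewrite IHn. ring. Qed.

Lemma sumR_plus f g n : sumR (fun k => f k + g k) n = sumR f n + sumR g n.
Proof. induction n; simpl. ring. rewrite IHn. ring. Qed.

Lemma sumR_scal a f n : sumR (fun k => a * f k) n = a * sumR f n.
Proof. induction n; simpl. ring. rewrite IHn. ring. Qed.

Lemma sumR_nonneg f n : (forall k, (k < n)%nat -> 0 <= f k) -> 0 <= sumR f n.
Proof. induction n; simpl; intros H. lra. pose proof (H n ltac:(lia)). pose proof (IHn ltac:(intros; apply H; lia)). lra. Qed.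

Lemma sin_sub_add x y : 0 <= x -> 0 <= y -> x + y <= PI -> sin (x + y) <= sin x + sin y.
Proof.
  intros Hx Hy Hxy. rewrite sin_plus. pose proof PI_RGT_0.
  assert (0 <= sin x) by (apply sin_ge_0; lra). assert (0 <= sin y) by (apply sin_ge_0; lra).
  pose proof (COS_bound x). pose proof (COS_bound y). nra.
Qed.

Lemma cos_2PI3 : cos (2 * PI / 3) = - (1/2).
Proof.
  replace (2 * PI / 3) with (PI - PI/3) by field. rewrite cosPIm, cos_PI3. ring.
Qed.

Lemma Tri m c i j : NC m c -> (i < j)%nat -> (j < m)%nat ->
  phU c i + phV m c j <= 2 * PI / 3 ->
  subchain_length c i (j - i) <= 2*PI/3 * dist (c i) (c j).
Proof.
  intros HN Hij Hj Hsum.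
  set (n := (j - i)%nat).
  set (ph := phU c i). set (ps := phV m c j).
  pose proof PI_RGT_0 as PIp. pose proof PI_gt3.
  pose proof (phV_le m c j HN ltac:(lia) Hj) as PV.
  pose proof (phU_le m c i HN ltac:(lia)) as PU.
  fold ph ps in PV, PU, Hsum.
  set (Sg := sin (ph + ps)).
  assert (Sp : 0 < Sg) by (apply sin_gt_0; lra).
  assert (Trng : forall k, (k < n)%nat -> - ps <= th c (i + k) <= ph).
  { intros k Hk. split.
    - pose proof (th_gt_phV m c j HN ltac:(lia) Hj).
      pose proof (th_mono' m c (i + k)%nat (j-1)%nat HN ltac:(unfold n in *; lia) ltac:(lia)). fold ps in H0. lra.
    - pose proof (th_lt_phU m c i HN ltac:(lia)).
      pose proof (th_mono' m c i (i + k)%nat HN ltac:(lia) ltac:(unfold n in *; lia)). fold ph in H0. lra. }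
  set (al := fun k => ll c (i + k) * sin (th c (i + k) + ps) / Sg).
  set (be := fun k => ll c (i + k) * sin (ph - th c (i + k)) / Sg).
  assert (Dec : forall k, (k < n)%nat ->
    ll c (i + k) * cos (th c (i + k)) = al k * cos ph + be k * cos ps /\
    ll c (i + k) * sin (th c (i + k)) = al k * sin ph - be k * sin ps /\
    0 <= al k /\ 0 <= be k /\ ll c (i + k) <= al k + be k).
  { intros k Hk. specialize (Trng k Hk). set (tk := th c (i + k)) in *.
    pose proof (NC_ll_pos m c (i + k) HN ltac:(unfold n in *; lia)) as Lp.
    set (lk := ll c (i + k)) in *.
    assert (I1' : Sg * cos tk = sin (ph - tk) * cos ps + sin (tk + ps) * cos ph).
    { unfold Sg. pose proof (comb_cos ph (- ps) tk).
      replace (ph - - ps) with (ph + ps) in H0 by ring. replace (tk - - ps) with (tk + ps) in H0 by ring.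
      rewrite cos_neg in H0. exact H0. }
    assert (I2 : Sg * sin tk = sin (ph - tk) * - sin ps + sin (tk + ps) * sin ph).
    { unfold Sg. pose proof (comb_sin ph (- ps) tk).
      replace (ph - - ps) with (ph + ps) in H0 by ring. replace (tk - - ps) with (tk + ps) in H0 by ring.
      rewrite sin_neg in H0. exact H0. }
    assert (A1 : 0 <= sin (tk + ps)) by (apply sin_ge_0; lra).
    assert (A2 : 0 <= sin (ph - tk)) by (apply sin_ge_0; lra).
    assert (A3 : Sg <= sin (tk + ps) + sin (ph - tk)).
    { unfold Sg. replace (ph + ps) with ((tk + ps) + (ph - tk)) by ring. apply sin_sub_add; lra. }
    unfold al, be. fold tk lk.
    split; [|split; [|split; [|split]]].
    - apply (Rmult_eq_reg_l Sg); [|lra]. field_simplify; [|lra]. nra.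
    - apply (Rmult_eq_reg_l Sg); [|lra]. field_simplify; [|lra]. nra.
    - unfold Rdiv. apply Rmult_le_pos; [nra | left; apply Rinv_0_lt_compat; lra].
    - unfold Rdiv. apply Rmult_le_pos; [nra | left; apply Rinv_0_lt_compat; lra].
    - apply (Rmult_le_reg_l Sg); [lra|]. field_simplify; [|lra]. nra. }
  set (Xs := sumR al n). set (Ys := sumR be n).
  assert (Xp : 0 <= Xs) by (apply sumR_nonneg; intros; apply Dec; auto).
  assert (Yp : 0 <= Ys) by (apply sumR_nonneg; intros; apply Dec; auto).
  assert (Ledge : forall k, (k < n)%nat ->
     fst (c (i + S k)%nat) - fst (c (i + k)%nat) = ll c (i + k) * cos (th c (i + k)) /\
     snd (c (i + S k)%nat) - snd (c (i + k)%nat) = ll c (i + k) * sin (th c (i + k))).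
  { intros k Hk. destruct (NC_edge m c (i + k) HN ltac:(unfold n in *; lia)) as [E1 [E2 _]].
    replace (i + S k)%nat with (S (i + k)) by lia. lra. }
  assert (DX : fst (c j) - fst (c i) = Xs * cos ph + Ys * cos ps).
  { pose proof (sumR_tele2 (fun k => fst (c (i + k)%nat)) n) as T. simpl in T.
    replace (i + n)%nat with j in T by (unfold n; lia). replace (i + 0)%nat with i in T by lia.
    rewrite <- T. unfold Xs, Ys.
    replace (sumR al n * cos ph + sumR be n * cos ps) with (cos ph * sumR al n + cos ps * sumR be n) by ring.
    rewrite <- !sumR_scal, <- sumR_plus.
    apply sumR_ext. intros k Hk. destruct (Ledge k Hk) as [A _]. destruct (Dec k Hk) as [B _].
    rewrite A, B. ring. }
  assert (DY : snd (c j) - snd (c i) = Xs * sin ph - Ys * sin ps).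
  { pose proof (sumR_tele2 (fun k => snd (c (i + k)%nat)) n) as T. simpl in T.
    replace (i + n)%nat with j in T by (unfold n; lia). replace (i + 0)%nat with i in T by lia.
    rewrite <- T. unfold Xs, Ys.
    replace (sumR al n * sin ph - sumR be n * sin ps) with (sin ph * sumR al n + (- sin ps) * sumR be n) by ring.
    rewrite <- !sumR_scal, <- sumR_plus.
    apply sumR_ext. intros k Hk. destruct (Ledge k Hk) as [_ A]. destruct (Dec k Hk) as [_ [B _]].
    rewrite A, B. ring. }
  assert (LL : subchain_length c i n <= Xs + Ys).
  { rewrite subchain_sum. unfold Xs, Ys. rewrite <- sumR_plus. apply sumR_le.
    intros k Hk. destruct (Dec k Hk) as [_ [_ [_ [_ B]]]]. unfold ll in B.
    replace (i + S k)%nat with (S (i + k)) by lia. exact B. }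
  assert (Cb : - (1/2) <= cos (ph + ps)).
  { rewrite <- cos_2PI3. apply cos_decr_1; lra. }
  assert (D2 : (fst (c j) - fst (c i))^2 + (snd (c j) - snd (c i))^2 = Xs^2 + Ys^2 + 2 * Xs * Ys * cos (ph + ps)).
  { rewrite DX, DY, cos_plus. pose proof (sc ph). pose proof (sc ps).
    transitivity (Xs^2 * (sin ph^2 + cos ph^2) + Ys^2 * (sin ps^2 + cos ps^2) + 2 * Xs * Ys * (cos ph * cos ps - sin ph * sin ps)); [ring|].
    rewrite !sc. ring. }
  assert (Dd : (Xs + Ys)/2 <= dist (c i) (c j)).
  { unfold dist. replace ((fst (c i) - fst (c j)) ^ 2 + (snd (c i) - snd (c j)) ^ 2) with ((fst (c j) - fst (c i)) ^ 2 + (snd (c j) - snd (c i)) ^ 2) by ring.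
    rewrite D2. rewrite <- (sqrt_pow2 ((Xs+Ys)/2)) by lra. apply sqrt_le_1_alt.
    assert (0 <= Xs * Ys) by nra.
    assert (0 <= Xs * Ys * (cos (ph+ps) + 1/2)) by (apply Rmult_le_pos; lra).
    pose proof (pow2_ge_0 (Xs - Ys)). nra. }
  fold n. assert (0 <= dist (c i) (c j)) by (unfold dist; apply sqrt_pos).
  assert (0 <= (2*PI/3 - 2) * dist (c i) (c j)) by (apply Rmult_le_pos; lra). lra.
Qed.

Lemma sector ph x y : 0 < ph < PI/3 -> x^2 + y^2 <= 1 -> 0 <= y -> - x * sin ph + y * cos ph <= 0 ->
  (x - cos (ph - PI/3))^2 + (y - sin (ph - PI/3))^2 <= 1.
Proof.
  intros Hp H1 H2 H3. pose proof PI_RGT_0.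
  set (w := ph - PI/3).
  assert (Sp : 0 < sin ph) by (apply sin_gt_0; lra).
  set (be := y / sin ph). set (al := x - be * cos ph).
  assert (Yb : y = be * sin ph) by (unfold be; field; lra).
  assert (Bp : 0 <= be) by (unfold be, Rdiv; apply Rmult_le_pos; [lra | left; apply Rinv_0_lt_compat; lra]).
  assert (Ap : 0 <= al).
  { unfold al. apply (Rmult_le_reg_r (sin ph)); auto. rewrite Rmult_0_l.
    replace ((x - be * cos ph) * sin ph) with (x * sin ph - y * cos ph) by (rewrite Yb; ring). lra. }
  assert (Xa : x = al + be * cos ph) by (unfold al; ring).
  assert (Cw : 1/2 <= cos w).
  { unfold w. rewrite <- cos_PI3. replace (ph - PI/3) with (- (PI/3 - ph)) by ring. rewrite cos_neg.
    apply cos_decr_1; lra. }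
  assert (Cpw : cos (ph - w) = 1/2) by (unfold w; replace (ph - (ph - PI/3)) with (PI/3) by ring; apply cos_PI3).
  assert (Dot : x * cos w + y * sin w = al * cos w + be * cos (ph - w)).
  { rewrite Xa, Yb, cos_minus. ring. }
  rewrite Cpw in Dot.
  assert (N2 : x^2 + y^2 <= (al + be)^2).
  { rewrite Xa, Yb. pose proof (sc ph). pose proof (COS_bound ph).
    assert (0 <= al * be * (1 - cos ph)) by (apply Rmult_le_pos; [nra|lra]). nra. }
  assert (N3 : x^2 + y^2 <= al + be).
  { destruct (Rle_dec 1 (al + be)). lra. nra. }
  assert (E : (x - cos w)^2 + (y - sin w)^2 = x^2 + y^2 - 2 * (x * cos w + y * sin w) + (sin w ^2 + cos w^2)) by ring.
  rewrite sc in E. fold w. rewrite E.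
  assert (al * cos w >= al * (1/2)) by (apply Rle_ge; apply Rmult_le_compat_l; lra).
  lra.
Qed.

Lemma NC_y_nonneg m c k : NC m c -> (k < m)%nat -> 0 <= snd (c k).
Proof.
  intros HN Hk. destruct (Nat.eq_dec k 0) as [->|K0].
  { destruct HN as [Hm [H0 [H1 [Hl Ho]]]]. rewrite H0. simpl. lra. }
  destruct (Nat.eq_dec k (m-1)) as [->|K1].
  { destruct HN as [Hm [H0 [H1 [Hl Ho]]]]. rewrite H1. simpl. lra. }
  left. apply (NC_y_pos m c k HN); lia.
Qed.

Lemma main_norm m c i j : NC m c -> (i < j)%nat -> (j < m)%nat ->
  ~ (phV m c j < PI/3 /\ PI/3 <= phU c i /\ 2*PI/3 < phU c i + phV m c j) ->
  subchain_length c i (j - i) <= 2*PI/3 * dist (c i) (c j).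
Proof.
  intros HN Hij Hj Hex. pose proof PI_RGT_0.
  pose proof (phV_le m c j HN ltac:(lia) Hj) as PV.
  pose proof (phU_le m c i HN ltac:(lia)) as PU.
  assert (PUlt : (0 < i)%nat -> phU c i < PI/2).
  { intros. destruct (phU_spec m c i HN ltac:(lia) ltac:(lia)) as [_ [_ [_ P]]]. lra. }
  destruct (Rle_dec (phU c i + phV m c j) (2*PI/3)) as [HT|HT].
  { apply (Tri m); auto. }
  destruct (Rle_dec (PI/3) (phU c i)) as [HU|HU].
  - destruct (Rle_dec (PI/3) (phV m c j)) as [HV|HV].
    + apply (Gamma m c i j 0); auto; try lra.
      * intros. pose proof (PUlt H0). lra.
      * intros k Hk. rewrite cos_0, sin_0. destruct HN as [Hm [H0 [H1 [Hl Ho]]]].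
        destruct (Hl k ltac:(lia)) as [_ L]. lra.
    + exfalso. apply Hex. repeat split; lra.
  - assert (Hi : (0 < i)%nat). { destruct (Nat.eq_dec i 0) as [->|]. rewrite phU_0 in HU. lra. lia. }
    apply (Gamma m c i j (phU c i - PI/3)); auto; try lra.
    intros k Hk.
    destruct HN as [Hm [H0 [H1 [Hl Ho]]]] eqn:EE.
    apply sector. lra. apply (Hl k ltac:(lia)). apply (NC_y_nonneg m c k HN ltac:(lia)).
    apply (W1 m c i k HN); lia.
Qed.

Definition mir (m : nat) (c : nat -> point) : nat -> point :=
  fun k => (1 - fst (c (m - 1 - k)%nat), snd (c (m - 1 - k)%nat)).

Lemma NC_mir m c : NC m c -> NC m (mir m c).
Proof.
  intros [Hm [H0 [H1 [Hl Ho]]]]. unfold NC, mir.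
  split; [lia|]. split.
  { replace (m - 1 - 0)%nat with (m-1)%nat by lia. rewrite H1. simpl. f_equal; ring. }
  split.
  { replace (m - 1 - (m - 1))%nat with O by lia. rewrite H0. simpl. f_equal; ring. }
  split.
  { intros k Hk. simpl. destruct (Hl (m - 1 - k)%nat ltac:(lia)) as [A B]. split; nra. }
  intros i j k Hij Hjk Hk.
  pose proof (Ho (m-1-k)%nat (m-1-j)%nat (m-1-i)%nat ltac:(lia) ltac:(lia) ltac:(lia)) as O.
  unfold orient in *. simpl. lra.
Qed.

Lemma phU_mir m c j : NC m c -> (j < m)%nat -> phU (mir m c) (m - 1 - j) = phV m c j.
Proof.
  intros HN Hj. destruct (Nat.eq_dec j (m-1)) as [->|Hne].
  { replace (m - 1 - (m - 1))%nat with O by lia. rewrite phU_0, phV_last. reflexivity. }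
  unfold phU, phV. destruct (Nat.eq_dec (m - 1 - j) 0) as [E|_]; [lia|].
  destruct (Nat.eq_dec j (m-1)) as [E|_]; [lia|].
  unfold mir. replace (m - 1 - (m - 1 - j))%nat with j by lia. cbn [fst snd]. reflexivity.
Qed.

Lemma phV_mir m c i : NC m c -> (i < m)%nat -> phV m (mir m c) (m - 1 - i) = phU c i.
Proof.
  intros HN Hi. destruct (Nat.eq_dec i 0) as [->|Hne].
  { replace (m - 1 - 0)%nat with (m-1)%nat by lia. rewrite phU_0, phV_last. reflexivity. }
  unfold phU, phV. destruct (Nat.eq_dec (m - 1 - i) (m-1)) as [E|_]; [lia|].
  destruct (Nat.eq_dec i 0) as [E|_]; [lia|].
  unfold mir. replace (m - 1 - (m - 1 - i))%nat with i by lia. cbn [fst snd].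
  replace ((1 - (1 - fst (c i))) ^ 2) with (fst (c i) ^ 2) by ring. reflexivity.
Qed.

Lemma sumR_shift f n : sumR f (S n) = f O + sumR (fun k => f (S k)) n.
Proof. induction n; simpl in *. ring. rewrite IHn. ring. Qed.

Lemma sumR_rev f n : sumR f n = sumR (fun k => f (n - 1 - k)%nat) n.
Proof.
  induction n. reflexivity.
  rewrite (sumR_shift (fun k => f (S n - 1 - k)%nat)).
  change (sumR f (S n)) with (sumR f n + f n).
  replace (S n - 1 - 0)%nat with n by lia.
  rewrite IHn. rewrite Rplus_comm. f_equal.
  apply sumR_ext. intros k Hk. f_equal. lia.
Qed.

Lemma dist_mir m c a b : dist (mir m c a) (mir m c b) = dist (c (m-1-a)%nat) (c (m-1-b)%nat).
Proof. unfold dist, mir; simpl. f_equal. ring. Qed.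

Lemma dist_sym a b : dist a b = dist b a.
Proof. unfold dist. f_equal. ring. Qed.

Lemma subchain_mir m c i j : (i < j)%nat -> (j < m)%nat ->
  subchain_length (mir m c) (m - 1 - j) ((m - 1 - i) - (m - 1 - j)) = subchain_length c i (j - i).
Proof.
  intros Hij Hj. rewrite !subchain_sum.
  replace ((m - 1 - i) - (m - 1 - j))%nat with (j - i)%nat by lia.
  rewrite (sumR_rev (fun k => dist (c (i + k)%nat) (c (i + S k)%nat))).
  apply sumR_ext. intros k Hk. rewrite dist_mir, dist_sym. f_equal; f_equal; lia.
Qed.

Lemma norm_bound m c i j : NC m c -> (i < j)%nat -> (j < m)%nat ->
  subchain_length c i (j - i) <= 2*PI/3 * dist (c i) (c j).
Proof.
  intros HN Hij Hj.
  destruct (Rlt_dec (phV m c j) (PI/3)) as [A|A];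
  [destruct (Rle_dec (PI/3) (phU c i)) as [B|B];
   [destruct (Rlt_dec (2*PI/3) (phU c i + phV m c j)) as [C|C]|]|].
  2-4: apply (main_norm m); auto; intros [X [Y Z]]; lra.
  rewrite <- (subchain_mir m c i j Hij Hj).
  replace (dist (c i) (c j)) with (dist (mir m c (m - 1 - j)) (mir m c (m - 1 - i))).
  2:{ rewrite dist_mir, dist_sym. f_equal; f_equal; lia. }
  apply (main_norm m). apply NC_mir; auto. lia. lia.
  rewrite phU_mir, phV_mir by (auto; lia). intros [X [Y Z]]. lra.
Qed.

Definition Tr (p : point) (a b D s : R) (z : point) : point :=
  ((a * (fst z - fst p) + b * (snd z - snd p)) / D, s * (- b * (fst z - fst p) + a * (snd z - snd p)) / D).

Lemma Tr_dist p a b D s z z' : 0 < D -> a^2 + b^2 = 1 -> s * s = 1 ->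
  dist (Tr p a b D s z) (Tr p a b D s z') = dist z z' / D.
Proof.
  intros HD Hab Hs. unfold dist, Tr. cbn [fst snd].
  set (u := fst z - fst z'). set (v := snd z - snd z').
  replace ((fst z - fst z') ^ 2 + (snd z - snd z') ^ 2) with (u^2 + v^2) by reflexivity.
  replace (((a * (fst z - fst p) + b * (snd z - snd p)) / D - (a * (fst z' - fst p) + b * (snd z' - snd p)) / D) ^ 2 +
   (s * (- b * (fst z - fst p) + a * (snd z - snd p)) / D - s * (- b * (fst z' - fst p) + a * (snd z' - snd p)) / D) ^ 2)
   with (((a*u+b*v)^2 + (s*s)*(-b*u + a*v)^2)/D^2).
  2:{ unfold u, v. field. lra. }
  rewrite Hs. replace ((a*u+b*v)^2 + 1*(-b*u + a*v)^2) with ((u^2+v^2)*(a^2+b^2)) by ring.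
  rewrite Hab, Rmult_1_r.
  rewrite sqrt_div_alt by (apply pow_lt; lra). rewrite sqrt_pow2 by lra. reflexivity.
Qed.

Lemma Tr_orient p a b D s z1 z2 z3 : 0 < D -> a^2 + b^2 = 1 ->
  orient (Tr p a b D s z1) (Tr p a b D s z2) (Tr p a b D s z3) = s * orient z1 z2 z3 / (D * D).
Proof.
  intros HD Hab. unfold orient, Tr. cbn [fst snd].
  transitivity (s * (a^2 + b^2) * ((fst z2 - fst z1) * (snd z3 - snd z1) - (snd z2 - snd z1) * (fst z3 - fst z1)) / (D * D)).
  - field. lra.
  - rewrite Hab. field. lra.
Qed.

Lemma vertex_lune m c k : (2 <= m)%nat -> chain_in_lune m c -> (k < m)%nat -> in_lune (c O) (c (m-1)%nat) (c k).
Proof.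
  intros Hm HL Hk. destruct (Nat.eq_dec k (m-1)) as [->|Hne].
  - pose proof (HL (m-2)%nat 1 ltac:(lia) ltac:(lra)) as H.
    replace (S (m-2)) with (m-1)%nat in H by lia.
    replace ((1 - 1) * fst (c (m - 2)%nat) + 1 * fst (c (m - 1)%nat), (1 - 1) * snd (c (m - 2)%nat) + 1 * snd (c (m - 1)%nat))
      with (c (m-1)%nat) in H. exact H.
    rewrite (surjective_pairing (c (m-1)%nat)) at 1. f_equal; ring.
  - pose proof (HL k 0 ltac:(lia) ltac:(lra)) as H.
    replace ((1 - 0) * fst (c k) + 0 * fst (c (S k)), (1 - 0) * snd (c k) + 0 * snd (c (S k)))
      with (c k) in H. exact H.
    rewrite (surjective_pairing (c k)) at 1. f_equal; ring.
Qed.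

Lemma dist_nonneg a b : 0 <= dist a b.
Proof. unfold dist. apply sqrt_pos. Qed.

Lemma dist_zero a b : dist a b <= 0 -> fst a = fst b /\ snd a = snd b.
Proof.
  intros H. assert (dist a b = 0) by (pose proof (dist_nonneg a b); lra).
  unfold dist in H0. apply sqrt_eq_0 in H0.
  - pose proof (pow2_ge_0 (fst a - fst b)). pose proof (pow2_ge_0 (snd a - snd b)). split; nra.
  - pose proof (pow2_ge_0 (fst a - fst b)). pose proof (pow2_ge_0 (snd a - snd b)). lra.
Qed.

Lemma dist_sq a b : dist a b ^ 2 = (fst a - fst b)^2 + (snd a - snd b)^2.
Proof. unfold dist. rewrite pow2_sqrt; [reflexivity|]. pose proof (pow2_ge_0 (fst a - fst b)). pose proof (pow2_ge_0 (snd a - snd b)). lra. Qed.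

Lemma subchain_scale c c' i n D : 0 < D ->
  (forall k, (k < n)%nat -> dist (c' (i + k)%nat) (c' (i + S k)%nat) = dist (c (i + k)%nat) (c (i + S k)%nat) / D) ->
  subchain_length c' i n = subchain_length c i n / D.
Proof.
  intros HD H. rewrite !subchain_sum. unfold Rdiv.
  rewrite Rmult_comm, <- sumR_scal. apply sumR_ext. intros k Hk. rewrite H by auto. unfold Rdiv. ring.
Qed.

Lemma subchain_zero c i n : (forall k, (k < n)%nat -> dist (c (i + k)%nat) (c (i + S k)%nat) = 0) ->
  subchain_length c i n = 0.
Proof.
  intros H. rewrite subchain_sum. transitivity (sumR (fun _ => 0) n).
  apply sumR_ext; auto. clear H. induction n; simpl; auto. rewrite IHn. ring.
Qed.

Theorem theorem4 (m : nat) (c : nat -> point) :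
  convex_chain m c ->
  chain_in_lune m c ->
  stretch_at_most m c (2 * PI / 3).
Proof.
  intros Hconv HL i j Hij Hj.
  pose proof PI_RGT_0 as PIp. pose proof PI_gt3 as PI3.
  destruct (Nat.eq_dec i j) as [<-|Hne].
  { replace (i - i)%nat with O by lia. simpl. pose proof (dist_nonneg (c i) (c i)).
    apply Rmult_le_pos; lra. }
  assert (Hm2 : (2 <= m)%nat) by lia.
  set (p := c O). set (q := c (m-1)%nat). set (D := dist p q).
  assert (VL : forall k, (k < m)%nat -> dist (c k) p <= D /\ dist (c k) q <= D).
  { intros k Hk. apply (vertex_lune m c k Hm2 HL Hk). }
  destruct (Req_dec D 0) as [HD0|HDn].
  {
    assert (EQ : forall k, (k < m)%nat -> fst (c k) = fst p /\ snd (c k) = snd p).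
    { intros k Hk. apply dist_zero. destruct (VL k Hk). lra. }
    rewrite subchain_zero.
    - apply Rmult_le_pos; [lra|apply dist_nonneg].
    - intros k Hk. destruct (EQ (i + k)%nat ltac:(lia)) as [A1 A2]. destruct (EQ (i + S k)%nat ltac:(lia)) as [B1 B2].
      unfold dist. rewrite A1, A2, B1, B2. replace ((fst p - fst p) ^ 2 + (snd p - snd p) ^ 2) with 0 by ring. apply sqrt_0. }
  assert (HD : 0 < D) by (pose proof (dist_nonneg p q); unfold D in *; lra).
  destruct (Compare_dec.le_lt_dec 3 m) as [Hm3|Hm3].
  2:{ assert (i = O /\ j = 1%nat) as [-> ->] by lia. simpl.
      pose proof (dist_nonneg (c O) (c 1%nat)). nra. }
  set (a := (fst q - fst p) / D). set (b := (snd q - snd p) / D).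
  assert (DD : D * D = (fst p - fst q)^2 + (snd p - snd q)^2).
  { unfold D, dist. apply sqrt_sqrt. pose proof (pow2_ge_0 (fst p - fst q)). pose proof (pow2_ge_0 (snd p - snd q)). lra. }
  assert (Hab : a^2 + b^2 = 1).
  { unfold a, b. field_simplify; [|lra]. replace (D^2) with (D*D) by ring. rewrite DD. field.
    rewrite <- DD. nra. }
  assert (Hs : exists s, s * s = 1 /\ forall i j k, (i < j)%nat -> (j < k)%nat -> (k < m)%nat -> s * orient (c i) (c j) (c k) < 0).
  { destruct Hconv as [Hc|Hc].
    - exists (-1). split. ring. intros i' j' k' H1 H2 H3. pose proof (Hc i' j' k' H1 H2 H3). lra.
    - exists 1. split. ring. intros i' j' k' H1 H2 H3. pose proof (Hc i' j' k' H1 H2 H3). lra. }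
  destruct Hs as [s [Hs1 Hs2]].
  set (c' := fun k => Tr p a b D s (c k)).
  assert (TD : forall z z', dist (Tr p a b D s z) (Tr p a b D s z') = dist z z' / D) by (intros; apply Tr_dist; auto).
  assert (Tp : Tr p a b D s p = (0,0)).
  { unfold Tr. f_equal; field; lra. }
  assert (Tq : Tr p a b D s q = (1,0)).
  { unfold Tr. fold a b. unfold a, b. f_equal; field_simplify; try lra.
    replace (D^2) with (D*D) by ring. rewrite DD. field. rewrite <- DD. nra. }
  assert (HN : NC m c').
  { unfold NC. split; [exact Hm3|]. split; [exact Tp|]. split; [exact Tq|]. split.
    - intros k Hk. destruct (VL k Hk) as [L1 L2]. unfold c'.
      pose proof (TD (c k) p) as E1. pose proof (TD (c k) q) as E2. rewrite Tp in E1. rewrite Tq in E2.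
      assert (F1 : dist (Tr p a b D s (c k)) (0,0) <= 1).
      { rewrite E1. apply (Rmult_le_reg_r D); auto. unfold Rdiv. rewrite Rmult_assoc, Rinv_l by lra. lra. }
      assert (F2 : dist (Tr p a b D s (c k)) (1,0) <= 1).
      { rewrite E2. apply (Rmult_le_reg_r D); auto. unfold Rdiv. rewrite Rmult_assoc, Rinv_l by lra. lra. }
      pose proof (dist_sq (Tr p a b D s (c k)) (0,0)) as S1. pose proof (dist_sq (Tr p a b D s (c k)) (1,0)) as S2.
      cbn [fst snd] in S1, S2.
      pose proof (dist_nonneg (Tr p a b D s (c k)) (0,0)). pose proof (dist_nonneg (Tr p a b D s (c k)) (1,0)).
      split; nra.
    - intros i' j' k' H1 H2 H3. unfold c'. rewrite Tr_orient by auto.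
      pose proof (Hs2 i' j' k' H1 H2 H3).
      unfold Rdiv. assert (0 < / (D * D)) by (apply Rinv_0_lt_compat; nra). nra. }
  pose proof (norm_bound m c' i j HN ltac:(lia) Hj) as NB.
  rewrite (subchain_scale c c' i (j - i) D HD) in NB.
  2:{ intros. unfold c'. apply TD. }
  unfold c' in NB. rewrite TD in NB.
  apply (Rmult_le_compat_r D) in NB; [|lra].
  unfold Rdiv in NB. rewrite !Rmult_assoc, Rinv_l in NB by lra. lra.
Qed.
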